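(* Let $\alpha,\beta$ be real numbers with $\beta\le\alpha<1$ and $\alpha>0$. Then the $\beta$-Ces\`aro operator $C_\beta$ maps $\mathcal{B}_\alpha^0$ into $\mathcal{B}_\alpha^0$ and is a bounded linear operator from $(\mathcal{B}_\alpha^0,\|\cdot\|_{\mathcal{B}_\alpha})$ to itself.
   Context: $\mathbb{D}=\{z\in\mathbb{C}:|z|<1\}$. For $\alpha>0$, the $\alpha$-Bloch space $\mathcal{B}_\alpha$ is the space of analytic functions $f$ on $\mathbb{D}$ with $\|f\|_{\mathcal{B}_\alpha}:=\sup_{z\in\mathbb{D}}(1-|z|^2)^\alpha|f'(z)|<\infty$. $\mathcal{B}_\alpha^0=\{f\in\mathcal{B}_\alpha: f(0)=0\}$, normed by $\|\cdot\|_{\mathcal{B}_\alpha}$. For $\beta\in\mathbb{R}$, the $\beta$-Ces\`aro operator is $C_\beta(f)(z)=\int_0^z \frac{f(w)}{w(1-w)^\beta}\,dw$ for analytic $f$ on $\mathbb{D}$ with $f(0)=0$, where $(1-w)^{\beta}$ is defined by the principal branch. *)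

(* Defs.v *)
From Stdlib Require Import Reals ClassicalEpsilon.
From Coquelicot Require Import Coquelicot.
Open Scope R_scope.

Definition in_disc (z : C) : Prop := Cmod z < 1.

Definition analytic_on_disc (f : C -> C) : Prop :=
  forall z : C, in_disc z -> ex_derive f z.

(* The complex derivative f'(z) (meaningful where f is differentiable). *)
Definition Cderiv (f : C -> C) (z : C) : C :=
  epsilon (inhabits (0%R, 0%R) : inhabited C) (fun l : C => is_derive f z l).

(* Principal argument, with values in (-PI, PI]; Arg 0 = 0. *)
Definition Arg (z : C) : R :=
  let x := fst z in let y := snd z in
  if Rlt_dec 0 x then atan (y / x)
  else if Rlt_dec x 0 then
    (if Rle_dec 0 y then atan (y / x) + PI else atan (y / x) - PI)
  else if Rlt_dec 0 y then PI / 2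
  else if Rlt_dec y 0 then - (PI / 2)
  else 0.

(* Principal branch of z^b = exp (b * Log z), Log z = ln|z| + i Arg z,
   for z <> 0 (z^b := 0 at z = 0; never used below since 1 - w <> 0 on D). *)
Definition cpow (z : C) (b : R) : C :=
  if Req_EM_T (Cmod z) 0 then (0%R, 0%R)
  else (Rpower (Cmod z) b * cos (b * Arg z), Rpower (Cmod z) b * sin (b * Arg z)).

Definition CRInt (g : R -> C) (a b : R) : C :=
  (RInt (fun t => fst (g t)) a b, RInt (fun t => snd (g t)) a b).

Definition seg_integral (h : C -> C) (z : C) : C :=
  CRInt (fun t => (h (RtoC t * z) * z)%C) 0 1.

Definition cesaro (beta : R) (f : C -> C) (z : C) : C :=
  seg_integral (fun w => (f w / (w * cpow (1 - w) beta))%C) z.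

Definition bloch_weight (alpha : R) (f : C -> C) (z : C) : R :=
  Rpower (1 - Cmod z ^ 2) alpha * Cmod (Cderiv f z).

Definition in_bloch (alpha : R) (f : C -> C) : Prop :=
  analytic_on_disc f /\
  exists M : R, forall z : C, in_disc z -> bloch_weight alpha f z <= M.

Definition in_bloch0 (alpha : R) (f : C -> C) : Prop :=
  in_bloch alpha f /\ f (0%R, 0%R) = (0%R, 0%R).

Definition bloch_norm (alpha : R) (f : C -> C) : R :=
  real (Lub_Rbar (fun x : R => exists z : C, in_disc z /\ x = bloch_weight alpha f z)).

(* Main.v *)
Require Import Defs.
From Stdlib Require Import Reals Lra Lia Psatz ClassicalEpsilon Arith.
From Coquelicot Require Import Coquelicot.
Open Scope R_scope.

Lemma is_derive_C_intro (f : C -> C) (x l : C) :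
  (forall eps : R, 0 < eps -> exists delta : R, 0 < delta /\
     forall y : C, Cmod (y - x) < delta ->
       Cmod (f y - f x - l * (y - x)) <= eps * Cmod (y - x)) ->
  is_derive f x l.
Proof.
  intros H. split.
  - apply is_linear_scal_l.
  - intros x' Hx'.
    pose proof (@is_filter_lim_locally_unique _ (AbsRing_NormedModule C_AbsRing) x x' Hx') as E. subst x'.
    intros eps.
    destruct (H eps (cond_pos eps)) as [d [Hd H1]].
    exists (mkposreal d Hd). intros y Hy. unfold ball in Hy. simpl in Hy.
    unfold AbsRing_ball in Hy. simpl in Hy.
    change (Cmod (f y - f x - (y - x) * l) <= eps * Cmod (y - x)).
    rewrite (Cmult_comm (y - x) l). apply H1. exact Hy.
Qed.

Lemma is_derive_C_elim (f : C -> C) (x l : C) :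
  is_derive f x l ->
  (forall eps : R, 0 < eps -> exists delta : R, 0 < delta /\
     forall y : C, Cmod (y - x) < delta ->
       Cmod (f y - f x - l * (y - x)) <= eps * Cmod (y - x)).
Proof.
  intros [_ H] eps Heps.
  specialize (H x (fun P HP => HP) (mkposreal eps Heps)).
  destruct H as [d H].
  exists d. split. apply cond_pos. intros y Hy.
  specialize (H y Hy). simpl in H.
  change (Cmod (f y - f x - (y - x) * l) <= eps * Cmod (y - x)) in H.
  rewrite (Cmult_comm l (y - x)). exact H.
Qed.

Definition DC (f : C -> C) (x l : C) : Prop :=
  forall eps : R, 0 < eps -> exists delta : R, 0 < delta /\
     forall y : C, Cmod (y - x) < delta ->
       Cmod (f y - f x - l * (y - x)) <= eps * Cmod (y - x).

Lemma DC_is_derive f x l : DC f x l <-> is_derive f x l.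
Proof. split. intros H; apply is_derive_C_intro; exact H. intros H; exact (is_derive_C_elim f x l H). Qed.

Lemma DC_is_derive_A (f : C -> C) (x l : C) :
  DC f x l <-> @is_derive C_AbsRing (AbsRing_NormedModule C_AbsRing) f x l.
Proof.
  split.
  - intros H. split.
    + apply is_linear_scal_l.
    + intros x' Hx'.
      pose proof (@is_filter_lim_locally_unique _ (AbsRing_NormedModule C_AbsRing) x x' Hx') as E. subst x'.
      intros eps.
      destruct (H eps (cond_pos eps)) as [d [Hd H1]].
      exists (mkposreal d Hd). intros y Hy. unfold ball in Hy. simpl in Hy.
      unfold AbsRing_ball in Hy. simpl in Hy.
      change (Cmod (f y - f x - (y - x) * l) <= eps * Cmod (y - x)).
      rewrite (Cmult_comm (y - x) l). apply H1. exact Hy.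
  - intros [_ H] eps Heps.
    specialize (H x (fun P HP => HP) (mkposreal eps Heps)).
    destruct H as [d H].
    exists d. split. apply cond_pos. intros y Hy.
    specialize (H y Hy). simpl in H.
    change (Cmod (f y - f x - (y - x) * l) <= eps * Cmod (y - x)) in H.
    rewrite (Cmult_comm l (y - x)). exact H.
Qed.

Lemma DC_mult f g x a b : DC f x a -> DC g x b ->
  DC (fun w => f w * g w)%C x (a * g x + f x * b)%C.
Proof.
  intros Ha Hb. apply DC_is_derive_A. apply DC_is_derive_A in Ha. apply DC_is_derive_A in Hb.
  apply (is_derive_mult f g x a b Ha Hb). apply Cmult_comm.
Qed.

Lemma DC_comp f g x a b : DC f (g x) a -> DC g x b -> DC (fun w => f (g w)) x (b * a)%C.
Proof.
  intros Ha Hb. apply DC_is_derive_A. apply DC_is_derive_A in Ha. apply DC_is_derive_A in Hb.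
  apply (@is_derive_comp _ (AbsRing_NormedModule C_AbsRing) f g x a b Ha Hb).
Qed.

Lemma DC_plus f g x a b : DC f x a -> DC g x b -> DC (fun w => f w + g w)%C x (a + b)%C.
Proof.
  intros Ha Hb. apply DC_is_derive_A. apply DC_is_derive_A in Ha. apply DC_is_derive_A in Hb.
  apply (@is_derive_plus _ (AbsRing_NormedModule C_AbsRing) f g x a b Ha Hb).
Qed.

Lemma DC_id x : DC (fun w => w) x 1%C.
Proof. apply DC_is_derive_A. apply (is_derive_id x). Qed.

Lemma DC_const (c : C) x : DC (fun _ => c) x 0%C.
Proof. apply DC_is_derive_A. apply (@is_derive_const _ (AbsRing_NormedModule C_AbsRing) c x). Qed.

Lemma DC_ext f g x l : (forall y, f y = g y) -> DC f x l -> DC g x l.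
Proof. intros E H eps He. destruct (H eps He) as [d [Hd H1]]. exists d. split; auto.
  intros y Hy. rewrite <- !E. auto. Qed.


Lemma DC_ext_loc f g x l : (exists r, 0 < r /\ forall y, Cmod (y - x) < r -> f y = g y) ->
  DC f x l -> DC g x l.
Proof.
  intros [r [Hr E]] H eps He. destruct (H eps He) as [d [Hd H1]]. exists (Rmin d r). split.
  apply Rmin_pos; auto.
  intros y Hy. assert (Ex : f x = g x). { apply E. replace (Cminus x x) with (RtoC 0) by ring. rewrite Cmod_0; auto. }
  rewrite <- Ex, <- E. apply H1. eapply Rlt_le_trans; [exact Hy| apply Rmin_l].
  eapply Rlt_le_trans; [exact Hy| apply Rmin_r].
Qed.

Lemma Cmod_sub_ge (a b : C) : Cmod a - Cmod b <= Cmod (a - b).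
Proof.
  assert (H := Cmod_triangle (a - b) b). replace (a - b + b)%C with a in H by ring. lra.
Qed.

Lemma Cmod_sub_sym (a b : C) : Cmod (a - b) = Cmod (b - a).
Proof. replace (a - b)%C with (- (b - a))%C by ring. apply Cmod_opp. Qed.

Lemma Cmult_neq_0 (a b : C) : a <> 0%C -> b <> 0%C -> (a * b)%C <> 0%C.
Proof.
  intros Ha Hb E. apply Cmod_gt_0 in Ha. apply Cmod_gt_0 in Hb.
  assert (H := Cmod_mult a b). rewrite E, Cmod_0 in H. nra.
Qed.

Lemma DC_Cinv (w : C) : w <> 0%C -> DC Cinv w (- / (w * w))%C.
Proof.
  intros Hw eps He.
  assert (Hm : 0 < Cmod w) by (apply Cmod_gt_0; auto).
  exists (Rmin (Cmod w / 2) (eps * (Cmod w)^3 / 2)). split.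
  { apply Rmin_pos. lra. apply Rmult_lt_0_compat. apply Rmult_lt_0_compat; auto. apply pow_lt; auto. lra. }
  intros y Hy.
  assert (Hy1 : Cmod (y - w) < Cmod w / 2) by (eapply Rlt_le_trans; [exact Hy| apply Rmin_l]).
  assert (Hy2 : Cmod (y - w) < eps * (Cmod w)^3 / 2) by (eapply Rlt_le_trans; [exact Hy| apply Rmin_r]).
  assert (Hyw : Cmod w / 2 <= Cmod y).
  { assert (H := Cmod_sub_ge w y). rewrite Cmod_sub_sym in H. lra. }
  assert (Hy0 : y <> 0%C). { intros E; subst. rewrite Cmod_0 in Hyw. lra. }
  replace (/ y - / w - - / (w * w) * (y - w))%C with ((y - w) * (y - w) * / (y * (w * w)))%C
    by (field; split; auto).
  rewrite !Cmod_mult, Cmod_inv, !Cmod_mult.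
  2:{ apply Cmult_neq_0; auto. apply Cmult_neq_0; auto. }
  set (d := Cmod (y - w)) in *. set (m := Cmod w) in *. set (c := Cmod y) in *.
  assert (d >= 0) by (apply Rle_ge, Cmod_ge_0).
  assert (Hc : 0 < c) by lra.
  apply Rle_trans with (d * d * / (m / 2 * (m * m))).
  { apply Rmult_le_compat_l. apply Rmult_le_pos; lra.
    apply Rinv_le_contravar. apply Rmult_lt_0_compat. lra. nra.
    apply Rmult_le_compat_r. nra. lra. }
  replace (d * d * / (m / 2 * (m * m))) with (d * (2 * d / m^3)) by (field; lra).
  rewrite Rmult_comm. apply Rmult_le_compat_r. lra.
  apply Rmult_le_reg_r with (m^3). apply pow_lt; auto.
  replace (2 * d / m ^ 3 * m ^ 3) with (2 * d) by (field; lra). lra.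
Qed.

Definition Ccont (f : C -> C) (x : C) : Prop :=
  forall eps : R, 0 < eps -> exists delta : R, 0 < delta /\
     forall y : C, Cmod (y - x) < delta -> Cmod (f y - f x) < eps.

Lemma DC_Ccont f x l : DC f x l -> Ccont f x.
Proof.
  intros H eps He. destruct (H 1 Rlt_0_1) as [d [Hd H1]].
  exists (Rmin d (eps / (Cmod l + 2))). split.
  { apply Rmin_pos; auto. apply Rdiv_lt_0_compat; auto. pose proof (Cmod_ge_0 l); lra. }
  intros y Hy.
  assert (Hy1 : Cmod (y - x) < d) by (eapply Rlt_le_trans; [exact Hy| apply Rmin_l]).
  assert (Hy2 : Cmod (y - x) < eps / (Cmod l + 2)) by (eapply Rlt_le_trans; [exact Hy| apply Rmin_r]).
  specialize (H1 y Hy1).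
  replace (f y - f x)%C with ((f y - f x - l * (y - x)) + l * (y - x))%C by ring.
  eapply Rle_lt_trans. apply Cmod_triangle. rewrite Cmod_mult.
  pose proof (Cmod_ge_0 l). pose proof (Cmod_ge_0 (y - x)).
  apply Rmult_lt_compat_r with (r := Cmod l + 2) in Hy2; [|lra].
  replace (eps / (Cmod l + 2) * (Cmod l + 2)) with eps in Hy2 by (field; lra). nra.
Qed.

Lemma mvt_bound (f df : R -> R) (a b M : R) :
  (forall x, derivable_pt_lim f x (df x)) ->
  (forall x, Rmin a b <= x <= Rmax a b -> Rabs (df x) <= M) ->
  Rabs (f b - f a) <= M * Rabs (b - a).
Proof.
  intros Hd Hb.
  destruct (MVT_gen f a b df) as [c [Hc E]].
  - intros x _. apply is_derive_Reals. apply Hd.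
  - intros x _. apply derivable_continuous_pt. exists (df x). apply Hd.
  - rewrite E, Rabs_mult. apply Rmult_le_compat_r. apply Rabs_pos. apply Hb. exact Hc.
Qed.

Lemma Rabs_between a b x : Rmin a b <= x <= Rmax a b -> Rabs (x - a) <= Rabs (b - a).
Proof. intros [H1 H2]. unfold Rmin, Rmax in *. destruct (Rle_dec a b); unfold Rabs;
  repeat destruct Rcase_abs; lra. Qed.

Lemma Rabs_between0 b x : Rmin 0 b <= x <= Rmax 0 b -> Rabs x <= Rabs b.
Proof. intros H. apply Rabs_between in H. rewrite !Rminus_0_r in H. exact H. Qed.

Lemma abs_sq x : Rabs x * Rabs x = x ^ 2.
Proof. rewrite <- Rabs_mult. rewrite Rabs_right. ring. apply Rle_ge. nra. Qed.

Lemma sin_abs_le x : Rabs (sin x) <= Rabs x.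
Proof.
  replace (sin x) with (sin x - sin 0) by (rewrite sin_0; ring).
  replace (Rabs x) with (1 * Rabs (x - 0)) by (rewrite Rminus_0_r; ring).
  apply mvt_bound with (df := cos). apply derivable_pt_lim_sin.
  intros y _. apply Rabs_le. pose proof (COS_bound y). lra.
Qed.

Lemma cos_sub1_le x : Rabs (cos x - 1) <= x ^ 2.
Proof.
  replace (cos x - 1) with (cos x - cos 0) by (rewrite cos_0; ring).
  replace (x ^ 2) with (Rabs x * Rabs (x - 0)) by (rewrite Rminus_0_r; apply abs_sq).
  apply mvt_bound with (df := fun y => - sin y). apply derivable_pt_lim_cos.
  intros y Hy. rewrite Rabs_Ropp. eapply Rle_trans. apply sin_abs_le. apply Rabs_between0. exact Hy.
Qed.

Lemma sin_sub_le x : Rabs x <= 1 -> Rabs (sin x - x) <= x ^ 2.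
Proof.
  intros Hx.
  replace (sin x - x) with ((sin x - x) - (sin 0 - 0)) by (rewrite sin_0; ring).
  replace (x ^ 2) with (Rabs x * Rabs (x - 0)) by (rewrite Rminus_0_r; apply abs_sq).
  apply mvt_bound with (f := fun y => sin y - y) (df := fun y => cos y - 1).
  { intros y. apply derivable_pt_lim_minus. apply derivable_pt_lim_sin. apply derivable_pt_lim_id. }
  intros y Hy. eapply Rle_trans. apply cos_sub1_le. apply Rabs_between0 in Hy.
  rewrite <- abs_sq. pose proof (Rabs_pos y). nra.
Qed.

Lemma exp_sub1_le x : Rabs x <= 1 -> Rabs (exp x - 1) <= 3 * Rabs x.
Proof.
  intros Hx.
  replace (exp x - 1) with (exp x - exp 0) by (rewrite exp_0; ring).
  replace (Rabs x) with (Rabs (x - 0)) by (rewrite Rminus_0_r; ring).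
  apply mvt_bound with (df := exp). apply derivable_pt_lim_exp.
  intros y Hy. apply Rabs_between0 in Hy. rewrite Rabs_right by (apply Rle_ge, Rlt_le, exp_pos).
  apply Rle_trans with (exp 1). destruct (Req_dec y 1). subst; lra. left. apply exp_increasing.
  apply Rabs_le_between in Hy. lra. apply exp_le_3.
Qed.

Lemma exp_sub2_le x : Rabs x <= 1 -> Rabs (exp x - 1 - x) <= 3 * x ^ 2.
Proof.
  intros Hx.
  replace (exp x - 1 - x) with ((exp x - x) - (exp 0 - 0)) by (rewrite exp_0; ring).
  replace (3 * x ^ 2) with (3 * Rabs x * Rabs (x - 0)) by (rewrite Rminus_0_r, Rmult_assoc, abs_sq; ring).
  apply mvt_bound with (f := fun y => exp y - y) (df := fun y => exp y - 1).
  { intros y. apply derivable_pt_lim_minus. apply derivable_pt_lim_exp. apply derivable_pt_lim_id. }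
  intros y Hy. apply Rabs_between0 in Hy. eapply Rle_trans. apply exp_sub1_le. lra. lra.
Qed.

Lemma Cmod_le_sum (z : C) : Cmod z <= Rabs (fst z) + Rabs (snd z).
Proof.
  unfold Cmod. rewrite <- (sqrt_square (Rabs (fst z) + Rabs (snd z))).
  2:{ pose proof (Rabs_pos (fst z)); pose proof (Rabs_pos (snd z)); lra. }
  apply sqrt_le_1_alt. rewrite <- (abs_sq (fst z)), <- (abs_sq (snd z)).
  pose proof (Rabs_pos (fst z)); pose proof (Rabs_pos (snd z)); nra.
Qed.

Lemma Rabs_fst_le (z : C) : Rabs (fst z) <= Cmod z.
Proof. eapply Rle_trans. apply Rmax_l. apply Rmax_Cmod. Qed.
Lemma Rabs_snd_le (z : C) : Rabs (snd z) <= Cmod z.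
Proof. eapply Rle_trans. apply Rmax_r. apply Rmax_Cmod. Qed.

Definition cexp (z : C) : C := (exp (fst z) * cos (snd z), exp (fst z) * sin (snd z)).

Lemma cexp_add (a b : C) : cexp (a + b)%C = (cexp a * cexp b)%C.
Proof.
  unfold cexp. apply injective_projections; simpl; rewrite exp_plus;
  [rewrite cos_plus | rewrite sin_plus]; ring.
Qed.

Lemma cexp_0 : cexp 0%C = 1%C.
Proof. unfold cexp. apply injective_projections; simpl; rewrite exp_0, ?cos_0, ?sin_0; ring. Qed.

Lemma cexp_E_bound (k : C) : Cmod k <= 1 -> Cmod (cexp k - 1 - k)%C <= 12 * (Cmod k)^2.
Proof.
  intros Hk. eapply Rle_trans. apply Cmod_le_sum.
  pose proof (Rabs_fst_le k) as Ha. pose proof (Rabs_snd_le k) as Hb.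
  destruct k as [a b]. simpl in *. set (m := Cmod (a, b)) in *.
  assert (Hea : exp a <= 3).
  { apply Rle_trans with (exp 1). destruct (Req_dec a 1). subst; lra. left. apply exp_increasing.
    apply Rabs_le_between in Ha. lra. apply exp_le_3. }
  assert (Hep : 0 < exp a) by apply exp_pos.
  assert (H1 := exp_sub2_le a ltac:(lra)). assert (H2 := cos_sub1_le b).
  assert (H3 := sin_sub_le b ltac:(lra)). assert (H4 := exp_sub1_le a ltac:(lra)).
  replace (exp a * cos b + - (1) + - a) with ((exp a - 1 - a) + exp a * (cos b - 1)) by ring.
  replace (exp a * sin b + - (0) + - b) with (exp a * (sin b - b) + (exp a - 1) * b) by ring.
  eapply Rle_trans. apply Rplus_le_compat; apply Rabs_triang.
  rewrite !Rabs_mult, (Rabs_right (exp a)) by lra.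
  pose proof (Rabs_pos a). pose proof (Rabs_pos b). pose proof (Rabs_pos (cos b - 1)).
  pose proof (Rabs_pos (sin b - b)). pose proof (Rabs_pos (exp a - 1)).
  rewrite <- (abs_sq a) in H1. rewrite <- (abs_sq b) in H2, H3.
  assert (Rabs a * Rabs a <= m * m) by nra. assert (Rabs b * Rabs b <= m * m) by nra.
  assert (Rabs a * Rabs b <= m * m) by nra.
  assert (exp a * Rabs (cos b - 1) <= 3 * (Rabs b * Rabs b)) by nra.
  assert (exp a * Rabs (sin b - b) <= 3 * (Rabs b * Rabs b)) by nra.
  assert (Rabs (exp a - 1) * Rabs b <= 3 * Rabs a * Rabs b) by nra.
  lra.
Qed.

Lemma DC_cexp (z : C) : DC cexp z (cexp z).
Proof.
  intros eps He.
  set (M := Cmod (cexp z)). assert (HM : 0 <= M) by apply Cmod_ge_0.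
  exists (Rmin 1 (eps / (12 * M + 1))). split.
  { apply Rmin_pos. lra. apply Rdiv_lt_0_compat; lra. }
  intros y Hy.
  assert (Hy1 : Cmod (y - z) < 1) by (eapply Rlt_le_trans; [exact Hy| apply Rmin_l]).
  assert (Hy2 : Cmod (y - z) < eps / (12 * M + 1)) by (eapply Rlt_le_trans; [exact Hy| apply Rmin_r]).
  replace (cexp y - cexp z - cexp z * (y - z))%C with (cexp z * (cexp (y - z) - 1 - (y - z)))%C.
  2:{ replace (cexp y) with (cexp (z + (y - z))%C) by (f_equal; ring). rewrite cexp_add. ring. }
  rewrite Cmod_mult. fold M.
  pose proof (cexp_E_bound (y - z) ltac:(lra)) as HE.
  set (d := Cmod (y - z)) in *. assert (0 <= d) by apply Cmod_ge_0.
  apply Rle_trans with (M * (12 * d ^ 2)). apply Rmult_le_compat_l; auto.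
  apply Rmult_lt_compat_r with (r := 12 * M + 1) in Hy2; [|lra].
  replace (eps / (12 * M + 1) * (12 * M + 1)) with eps in Hy2 by (field; lra).
  nra.
Qed.

Lemma mvt_bound' (f df : R -> R) (a b M : R) :
  (forall x, Rmin a b <= x <= Rmax a b -> derivable_pt_lim f x (df x)) ->
  (forall x, Rmin a b <= x <= Rmax a b -> Rabs (df x) <= M) ->
  Rabs (f b - f a) <= M * Rabs (b - a).
Proof.
  intros Hd Hb.
  destruct (MVT_gen f a b df) as [c [Hc E]].
  - intros x Hx. apply is_derive_Reals. apply Hd. lra.
  - intros x Hx. apply derivable_continuous_pt. exists (df x). apply Hd. exact Hx.
  - rewrite E, Rabs_mult. apply Rmult_le_compat_r. apply Rabs_pos. apply Hb. exact Hc.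
Qed.

Definition clog (u : C) : C := (ln (Cmod u), atan (snd u / fst u)).

Lemma Cmod_sq (u : C) : Cmod u * Cmod u = fst u ^ 2 + snd u ^ 2.
Proof. unfold Cmod. rewrite sqrt_sqrt. ring. nra. Qed.

Lemma fst_le_Cmod (u : C) : fst u <= Cmod u.
Proof. eapply Rle_trans. apply Rle_abs. apply Rabs_fst_le. Qed.

Lemma Cmod_pos_of_fst (u : C) : 0 < fst u -> 0 < Cmod u.
Proof. intros H. pose proof (Rabs_fst_le u). rewrite Rabs_right in H0; lra. Qed.

Lemma cexp_clog (u : C) : 0 < fst u -> cexp (clog u) = u.
Proof.
  intros Hx. pose proof (Cmod_pos_of_fst u Hx) as Hm. pose proof (Cmod_sq u) as Hs.
  unfold cexp, clog. simpl. rewrite exp_ln by auto. rewrite cos_atan, sin_atan.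
  destruct u as [x y]. simpl in *. set (m := Cmod (x, y)) in *.
  assert (E : sqrt (1 + (y / x)²) = m / x).
  { rewrite <- (sqrt_pow2 (m / x)). f_equal. unfold Rsqr. field_simplify_eq. nra. lra.
    apply Rlt_le, Rdiv_lt_0_compat; auto. }
  rewrite E. apply injective_projections; simpl; field; lra.
Qed.

Lemma clog_lip (u v : C) : 0 < fst u -> Cmod (v - u) <= fst u / 2 ->
  Cmod (clog v - clog u) <= (2 / fst u + 4 * Cmod u / (fst u)^2) * Cmod (v - u).
Proof.
  intros Hx Hd. pose proof (Cmod_pos_of_fst u Hx) as Hmu.
  set (d := Cmod (v - u)) in *. assert (0 <= d) by apply Cmod_ge_0.
  assert (Hfd : Rabs (fst v - fst u) <= d) by (apply (Rabs_fst_le (v - u))).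
  assert (Hsd : Rabs (snd v - snd u) <= d) by (apply (Rabs_snd_le (v - u))).
  assert (Hxv : fst u / 2 <= fst v) by (apply Rabs_le_between in Hfd; lra).
  assert (Hmv : fst u / 2 <= Cmod v) by (pose proof (fst_le_Cmod v); lra).
  assert (Hmu' : fst u <= Cmod u) by (apply fst_le_Cmod).
  assert (Hmm : Rabs (Cmod v - Cmod u) <= d).
  { apply Rabs_le. pose proof (Cmod_sub_ge v u). pose proof (Cmod_sub_ge u v).
    rewrite Cmod_sub_sym in H1. fold d in H0, H1. lra. }
  eapply Rle_trans. apply Cmod_le_sum. simpl.
  assert (Hln : Rabs (ln (Cmod v) - ln (Cmod u)) <= 2 / fst u * d).
  { eapply Rle_trans. apply mvt_bound' with (df := fun t => / t) (M := 2 / fst u).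
    - intros t Ht. apply derivable_pt_lim_ln. unfold Rmin, Rmax in Ht. destruct Rle_dec in Ht; lra.
    - intros t Ht. unfold Rmin, Rmax in Ht. rewrite Rabs_right.
      2:{ apply Rle_ge, Rlt_le, Rinv_0_lt_compat. destruct Rle_dec in Ht; lra. }
      replace (2 / fst u) with (/ (fst u / 2)) by (field; lra).
      apply Rinv_le_contravar. lra. destruct Rle_dec in Ht; lra.
    - apply Rmult_le_compat_l. apply Rlt_le, Rdiv_lt_0_compat; lra. lra. }
  assert (Hat : Rabs (atan (snd v / fst v) - atan (snd u / fst u)) <= 1 * Rabs (snd u / fst u - snd v / fst v)).
  { rewrite Rabs_minus_sym. apply mvt_bound' with (df := fun t => / (1 + t ^ 2)).
    - intros t _. apply derivable_pt_lim_atan.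
    - intros t _. rewrite Rabs_right. replace 1 with (/ 1) at 2 by field. apply Rinv_le_contravar. lra. nra.
      apply Rle_ge, Rlt_le, Rinv_0_lt_compat. nra. }
  assert (Hq : Rabs (snd u / fst u - snd v / fst v) <= 4 * Cmod u / fst u ^ 2 * d).
  { replace (snd u / fst u - snd v / fst v) with
      ((snd u * (fst v - fst u) - fst u * (snd v - snd u)) / (fst u * fst v)) by (field; lra).
    rewrite Rabs_div by nra. rewrite (Rabs_right (fst u * fst v)) by nra.
    apply Rle_trans with ((Cmod u * d + Cmod u * d) / (fst u * (fst u / 2))).
    - apply Rle_trans with ((Cmod u * d + Cmod u * d) / (fst u * fst v)).
      + unfold Rdiv. apply Rmult_le_compat_r. apply Rlt_le, Rinv_0_lt_compat; nra.
        eapply Rle_trans. apply Rabs_triang. rewrite Rabs_Ropp, !Rabs_mult.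
        pose proof (Rabs_snd_le u). pose proof (Rabs_fst_le u). pose proof (Rabs_pos (snd u)).
        pose proof (Rabs_pos (fst u)). pose proof (Rabs_pos (fst v - fst u)).
        pose proof (Rabs_pos (snd v - snd u)). apply Rplus_le_compat; apply Rmult_le_compat; auto.
      + unfold Rdiv. apply Rmult_le_compat_l. nra. apply Rinv_le_contravar. nra. nra.
    - right. field. lra. }
  replace (fst u * (fst u * 1)) with (fst u ^ 2) by ring. unfold Rminus in *. rewrite Rmult_plus_distr_r. lra.
Qed.

Lemma DC_clog (u : C) : 0 < fst u -> DC clog u (/ u)%C.
Proof.
  intros Hx eps He.
  pose proof (Cmod_pos_of_fst u Hx) as Hmu.
  set (Lc := 2 / fst u + 4 * Cmod u / (fst u)^2).
  assert (HL : 0 < Lc).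
  { unfold Lc. apply Rplus_lt_0_compat. apply Rdiv_lt_0_compat; lra.
    apply Rdiv_lt_0_compat. lra. apply pow_lt; lra. }
  exists (Rmin (fst u / 2) (Rmin (/ Lc) (eps / (12 * Lc^2 + 1)))). split.
  { apply Rmin_pos. lra. apply Rmin_pos. apply Rinv_0_lt_compat; auto.
    apply Rdiv_lt_0_compat; auto. nra. }
  intros v Hv.
  assert (H1 : Cmod (v - u) < fst u / 2) by (eapply Rlt_le_trans; [exact Hv| apply Rmin_l]).
  assert (H2 : Cmod (v - u) < / Lc) by (eapply Rlt_le_trans; [exact Hv| eapply Rle_trans; [apply Rmin_r|apply Rmin_l]]).
  assert (H3 : Cmod (v - u) < eps / (12 * Lc^2 + 1)) by (eapply Rlt_le_trans; [exact Hv| eapply Rle_trans; [apply Rmin_r|apply Rmin_r]]).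
  assert (Hxv : 0 < fst v).
  { pose proof (Rabs_fst_le (v - u)). simpl in H. apply Rabs_le_between in H. lra. }
  assert (Hu0 : u <> 0%C). { apply Cmod_gt_0. auto. }
  pose proof (clog_lip u v Hx ltac:(lra)) as Hl. fold Lc in Hl.
  set (h := (clog v - clog u)%C) in *.
  set (d := Cmod (v - u)) in *. assert (0 <= d) by apply Cmod_ge_0.
  assert (Hv' : v = (u * cexp h)%C).
  { rewrite <- (cexp_clog v Hxv) at 1. rewrite <- (cexp_clog u Hx) at 1. rewrite <- cexp_add.
    f_equal. unfold h. ring. }
  change (Cmod (h - / u * (v - u))%C <= eps * d). replace (h - / u * (v - u))%C with (- (cexp h - 1 - h))%C.
  2:{ rewrite Hv'. field. auto. }
  rewrite Cmod_opp.
  assert (Hh : Cmod h <= 1).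
  { apply Rle_trans with (Lc * d). auto. apply Rmult_lt_compat_l with (r := Lc) in H2; auto.
    rewrite Rinv_r in H2; lra. }
  eapply Rle_trans. apply cexp_E_bound. auto.
  assert (0 <= Cmod h) by apply Cmod_ge_0.
  apply Rle_trans with (12 * (Lc * d)^2). apply Rmult_le_compat_l. lra. apply pow_incr. lra.
  apply Rmult_lt_compat_r with (r := 12 * Lc^2 + 1) in H3; [|nra].
  replace (eps / (12 * Lc ^ 2 + 1) * (12 * Lc ^ 2 + 1)) with eps in H3 by (field; nra).
  nra.
Qed.

Lemma DC_lin (a b x : C) : DC (fun w => a + b * w)%C x b.
Proof.
  intros eps He. exists 1. split. lra. intros y _.
  replace (a + b * y - (a + b * x) - b * (y - x))%C with (RtoC 0) by ring. simpl.
  rewrite Cmod_0. pose proof (Cmod_ge_0 (y - x)). nra.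
Qed.

Lemma DC_scal_const (c : C) f x l : DC f x l -> DC (fun w => c * f w)%C x (c * l)%C.
Proof.
  intros H. pose proof (DC_mult (fun _ => c) f x 0%C l (DC_const c x) H) as H1.
  assert (E : (0 * f x + c * l)%C = (c * l)%C) by ring. cbv beta in H1. rewrite E in H1. exact H1.
Qed.

Definition cpw (beta : R) (w : C) : C := cexp (RtoC beta * clog (1 - w))%C.

Lemma in_disc_fst (w : C) : in_disc w -> 0 < fst (1 - w)%C.
Proof. unfold in_disc. intros H. pose proof (fst_le_Cmod w). simpl. lra. Qed.

Lemma cpow_eq (beta : R) (w : C) : in_disc w -> cpow (1 - w)%C beta = cpw beta w.
Proof.
  intros Hw. pose proof (in_disc_fst w Hw) as Hx. pose proof (Cmod_pos_of_fst _ Hx) as Hm.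
  unfold cpow, cpw, cexp, clog, Arg. set (u := (1 - w)%C) in *.
  destruct (Req_EM_T (Cmod u) 0) as [E|_]. lra.
  destruct (Rlt_dec 0 (fst u)) as [_|N]. 2: lra.
  unfold Rpower. apply injective_projections; simpl; f_equal; f_equal; ring.
Qed.

Lemma DC_cpw (beta : R) (w : C) : in_disc w -> exists l, DC (cpw beta) w l.
Proof.
  intros Hw. eexists. unfold cpw.
  apply (DC_comp cexp (fun w => RtoC beta * clog (1 - w))%C). apply DC_cexp.
  apply DC_scal_const.
  apply (DC_comp clog (fun w => 1 - w)%C).
  apply DC_clog. apply in_disc_fst. auto.
  eapply DC_ext with (f := fun w => (1 + (-1) * w)%C). intros; ring. apply DC_lin.
Qed.

Lemma cexp_neq_0 (z : C) : cexp z <> 0%C.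
Proof.
  intros E. assert (H : Cmod (cexp z) = exp (fst z)).
  { transitivity (sqrt (exp (fst z) ^ 2)). 2: apply sqrt_pow2; apply Rlt_le, exp_pos.
    unfold cexp, Cmod. f_equal.
    pose proof (sin2_cos2 (snd z)) as S. unfold Rsqr in S.
    replace (exp (fst z) ^ 2) with (exp (fst z) ^ 2 * (sin (snd z) * sin (snd z) + cos (snd z) * cos (snd z))) by (rewrite S; ring).
    simpl. ring. }
  rewrite E, Cmod_0 in H. pose proof (exp_pos (fst z)). lra.
Qed.

Lemma cpw_neq_0 beta w : cpw beta w <> 0%C.
Proof. apply cexp_neq_0. Qed.

Lemma cpw_0 beta : cpw beta 0%C = 1%C.
Proof.
  unfold cpw, clog. replace (Cminus (RtoC 1) (RtoC 0)) with (RtoC 1) by ring. rewrite Cmod_1, ln_1.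
  replace (snd (RtoC 1) / fst (RtoC 1)) with 0 by (simpl; field). rewrite atan_0.
  replace (Cmult (RtoC beta) (0, 0)) with (RtoC 0). apply cexp_0.
  apply injective_projections; simpl; ring.
Qed.

Lemma Cmod_cpow (z : C) (beta : R) : Cmod z <> 0 -> Cmod (cpow z beta) = Rpower (Cmod z) beta.
Proof.
  intros H. unfold cpow. destruct (Req_EM_T (Cmod z) 0). contradiction.
  set (r := Rpower (Cmod z) beta). set (t := beta * Arg z).
  transitivity (sqrt (r ^ 2)). 2: apply sqrt_pow2; unfold r, Rpower; apply Rlt_le, exp_pos.
  unfold Cmod at 1. f_equal.
  pose proof (sin2_cos2 t) as S. unfold Rsqr in S.
  replace (r ^ 2) with (r ^ 2 * (sin t * sin t + cos t * cos t)) by (rewrite S; ring).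
  simpl. ring.
Qed.
Definition phi (q : C -> C) (a b : C) (t : R) : C := (q (a + RtoC t * (b - a)) * (b - a))%C.
Definition segI (q : C -> C) (a b : C) : C := @RInt C_R_CompleteNormedModule (phi q a b) 0 1.

Lemma norm_C_R (z : C) : @norm R_AbsRing C_R_NormedModule z = Cmod z.
Proof. unfold norm. simpl. unfold prod_norm, Cmod. simpl. change (norm (fst z)) with (Rabs (fst z)). change (norm (snd z)) with (Rabs (snd z)). f_equal. pose proof (abs_sq (fst z)). pose proof (abs_sq (snd z)). simpl in *. lra. Qed.
Lemma ball_C (x y : C) eps : Cmod (y - x) < eps -> @ball C_R_NormedModule x eps y.
Proof. intros H. apply C_NormedModule_mixin_compat1. exact H. Qed.

Notation isRC := (@is_RInt C_R_NormedModule).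
Notation exRC := (@ex_RInt C_R_NormedModule).

Definition SegOK (q : C -> C) (a b : C) : Prop :=
  forall t, 0 <= t <= 1 -> Ccont q (a + RtoC t * (b - a))%C.

Lemma cont_phi q a b t : Ccont q (a + RtoC t * (b - a))%C ->
  @continuous R_UniformSpace C_R_CompleteNormedModule (phi q a b) t.
Proof.
  intros H. apply filterlim_locally. intros eps.
  set (K := Cmod (b - a) + 1). assert (HK : 0 < K) by (unfold K; pose proof (Cmod_ge_0 (b - a)); lra).
  destruct (H (eps / K)) as [d [Hd H1]]. apply Rdiv_lt_0_compat. apply cond_pos. auto.
  exists (mkposreal (d / K) (Rdiv_lt_0_compat _ _ Hd HK)). intros s Hs.
  apply ball_C. unfold phi.
  change (Rabs (s - t) < d / K) in Hs.
  replace (q (a + RtoC s * (b - a)) * (b - a) - q (a + RtoC t * (b - a)) * (b - a))%C with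
    ((q (a + RtoC s * (b - a)) - q (a + RtoC t * (b - a))) * (b - a))%C by ring.
  rewrite Cmod_mult.
  assert (Hd2 : Cmod (a + RtoC s * (b - a) - (a + RtoC t * (b - a)))%C < d).
  { replace (a + RtoC s * (b - a) - (a + RtoC t * (b - a)))%C with (RtoC (s - t) * (b - a))%C.
    2:{ rewrite RtoC_minus. ring. }
    rewrite Cmod_mult, Cmod_R. pose proof (Cmod_ge_0 (b - a)).
    apply Rmult_lt_compat_r with (r := K) in Hs; auto.
    replace (d / K * K) with d in Hs by (field; lra). unfold K in Hs. pose proof (Rabs_pos (s - t)). nra. }
  specialize (H1 _ Hd2).
  pose proof (Cmod_ge_0 (b - a)). pose proof (Cmod_ge_0 (q (a + RtoC s * (b - a)) - q (a + RtoC t * (b - a)))%C).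
  apply Rle_lt_trans with (eps / K * Cmod (b - a)). apply Rmult_le_compat_r; lra.
  apply Rlt_le_trans with (eps / K * K). apply Rmult_lt_compat_l. apply Rdiv_lt_0_compat. apply cond_pos. auto.
  unfold K; lra. right; field; lra.
Qed.

Lemma seg_is q a b : SegOK q a b -> isRC (phi q a b) 0 1 (segI q a b).
Proof.
  intros H. unfold segI. apply (@RInt_correct C_R_CompleteNormedModule).
  apply (@ex_RInt_continuous C_R_CompleteNormedModule). intros z Hz. apply cont_phi. apply H.
  rewrite Rmin_left, Rmax_right in Hz; lra.
Qed.

Ltac Ceq := apply injective_projections; simpl;
  match goal with |- @eq _ ?x ?y => change (@eq R x y) end;
  repeat (progress (unfold minus, plus, opp, scal, mult; simpl)); field.

Lemma seg_sub q a b c d L : isRC (phi q a b) c d L ->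
  isRC (phi q (a + RtoC c * (b - a)) (a + RtoC d * (b - a)))%C 0 1 L.
Proof.
  intros H.
  assert (H' : isRC (phi q a b) ((d - c) * 0 + c) ((d - c) * 1 + c) L).
  { replace ((d - c) * 0 + c) with c by ring. replace ((d - c) * 1 + c) with d by ring. exact H. }
  apply (@is_RInt_comp_lin C_R_NormedModule) in H'.
  eapply (@is_RInt_ext C_R_NormedModule). 2: exact H'.
  intros y _. unfold phi.
  replace (a + RtoC ((d - c) * y + c) * (b - a))%C with
    (a + RtoC c * (b - a) + RtoC y * (a + RtoC d * (b - a) - (a + RtoC c * (b - a))))%C by Ceq.
  set (Q := q _). Ceq.
Qed.

Lemma seg_split q a b s : 0 < s < 1 -> SegOK q a b ->
  segI q a b = (segI q a (a + RtoC s * (b - a)) + segI q (a + RtoC s * (b - a)) b)%C.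
Proof.
  intros Hs H. pose proof (seg_is q a b H) as HI.
  assert (E1 : exRC (phi q a b) 0 s).
  { apply (@ex_RInt_Chasles_1 C_R_CompleteNormedModule) with 1. lra. eexists; exact HI. }
  assert (E2 : exRC (phi q a b) s 1).
  { apply (@ex_RInt_Chasles_2 C_R_CompleteNormedModule) with 0. lra. eexists; exact HI. }
  destruct E1 as [l1 H1]. destruct E2 as [l2 H2].
  assert (Hsum : isRC (phi q a b) 0 1 (plus l1 l2)) by (eapply (@is_RInt_Chasles C_R_NormedModule); eauto).
  assert (Eq : segI q a b = plus l1 l2).
  { eapply (@is_RInt_unique C_R_CompleteNormedModule) in Hsum. eapply (@is_RInt_unique C_R_CompleteNormedModule) in HI.
    congruence. }
  apply seg_sub in H1. apply seg_sub in H2.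
  replace (a + RtoC 0 * (b - a))%C with a in H1 by Ceq.
  replace (a + RtoC 1 * (b - a))%C with b in H2 by Ceq.
  apply (@is_RInt_unique C_R_CompleteNormedModule) in H1. apply (@is_RInt_unique C_R_CompleteNormedModule) in H2.
  rewrite Eq. unfold segI. rewrite H1, H2. reflexivity.
Qed.

Lemma seg_rev q a b : SegOK q a b -> segI q b a = (- segI q a b)%C.
Proof.
  intros H. pose proof (seg_is q a b H) as HI.
  apply (@is_RInt_swap C_R_NormedModule) in HI. apply seg_sub in HI.
  replace (a + RtoC 1 * (b - a))%C with b in HI by Ceq.
  replace (a + RtoC 0 * (b - a))%C with a in HI by Ceq.
  apply (@is_RInt_unique C_R_CompleteNormedModule) in HI. unfold segI at 1. rewrite HI. reflexivity.
Qed.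

Lemma seg_bound q a b M : SegOK q a b ->
  (forall t, 0 <= t <= 1 -> Cmod (q (a + RtoC t * (b - a))%C) <= M) ->
  Cmod (segI q a b) <= M * Cmod (b - a).
Proof.
  intros H HM. pose proof (seg_is q a b H) as HI.
  rewrite <- norm_C_R. replace (M * Cmod (b - a)) with ((1 - 0) * (M * Cmod (b - a))) by ring.
  apply (@norm_RInt_le_const C_R_NormedModule) with (f := phi q a b). lra.
  2: exact HI.
  intros t Ht. rewrite norm_C_R. unfold phi. rewrite Cmod_mult.
  apply Rmult_le_compat_r. apply Cmod_ge_0. auto.
Qed.

Lemma seg_minus q1 q2 a b : SegOK q1 a b -> SegOK q2 a b ->
  segI (fun w => q1 w - q2 w)%C a b = (segI q1 a b - segI q2 a b)%C.
Proof.
  intros H1 H2. pose proof (seg_is q1 a b H1) as I1. pose proof (seg_is q2 a b H2) as I2.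
  pose proof (@is_RInt_minus C_R_NormedModule _ _ _ _ _ _ I1 I2) as I3.
  eapply (@is_RInt_ext C_R_NormedModule) with (g := phi (fun w => q1 w - q2 w)%C a b) in I3.
  2:{ intros x _. unfold phi. set (Q1 := q1 _). set (Q2 := q2 _). Ceq. }
  apply (@is_RInt_unique C_R_CompleteNormedModule) in I3. unfold segI at 1. rewrite I3.
  Ceq.
Qed.

Lemma RInt_affine (al be : R) : is_RInt (fun t => al + t * be) 0 1 (al + be / 2).
Proof.
  replace (al + be / 2) with ((al * 1 + be * 1 ^ 2 / 2) - (al * 0 + be * 0 ^ 2 / 2)) by field.
  apply (is_RInt_derive (fun t => al * t + be * t ^ 2 / 2)).
  - intros x _. auto_derive. auto. field.
  - intros x _. apply (continuous_plus (fun _ => al) (fun t => t * be)). apply continuous_const.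
    apply (continuous_mult (fun t => t) (fun _ => be)). apply continuous_id. apply continuous_const.
Qed.

Lemma seg_lin (A B a b : C) :
  segI (fun w => A + B * w)%C a b = (A * (b - a) + B * (b * b - a * a) / 2)%C.
Proof.
  set (c1 := ((A + B * a) * (b - a))%C). set (c2 := (B * (b - a) * (b - a))%C).
  pose proof (RInt_affine (fst c1) (fst c2)) as R1. pose proof (RInt_affine (snd c1) (snd c2)) as R2.
  pose proof (@is_RInt_fct_extend_pair R_NormedModule R_NormedModule
     (fun t => (fst c1 + t * fst c2, snd c1 + t * snd c2)) 0 1 _ _ R1 R2) as I.
  change (isRC (fun t => (fst c1 + t * fst c2, snd c1 + t * snd c2)) 0 1
    (fst c1 + fst c2 / 2, snd c1 + snd c2 / 2)) in I.
  eapply (@is_RInt_ext C_R_NormedModule) with (g := phi (fun w => A + B * w)%C a b) in I.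
  2:{ intros x _. unfold phi, c1, c2. Ceq. }
  apply (@is_RInt_unique C_R_CompleteNormedModule) in I. unfold segI. rewrite I.
  unfold c1, c2. apply injective_projections; simpl; field.
Qed.

Definition Tri (q : C -> C) (a b c : C) : C := (segI q a b + segI q b c + segI q c a)%C.
Definition mid (x y : C) : C := (x + RtoC (1/2) * (y - x))%C.

Section Goursat.
Variable q : C -> C.
Variable P : C -> Prop.
Hypothesis HPc : forall x y t, P x -> P y -> 0 <= t <= 1 -> P (x + RtoC t * (y - x))%C.
Hypothesis HPcl : forall x, (forall eps, 0 < eps -> exists y, P y /\ Cmod (y - x) < eps) -> P x.
Hypothesis HPd : forall x, P x -> exists l, DC q x l.

Lemma P_segok x y : P x -> P y -> SegOK q x y.
Proof.
  intros Hx Hy t Ht. destruct (HPd _ (HPc x y t Hx Hy Ht)) as [l Hl]. eapply DC_Ccont; eauto.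
Qed.

Lemma P_mid x y : P x -> P y -> P (mid x y).
Proof. intros. apply HPc; auto. lra. Qed.

Lemma sub4 a b c : P a -> P b -> P c ->
  Tri q a b c = (Tri q a (mid a b) (mid c a) + Tri q (mid a b) b (mid b c)
               + Tri q (mid c a) (mid b c) c + Tri q (mid a b) (mid b c) (mid c a))%C.
Proof.
  intros Ha Hb Hc. unfold Tri.
  rewrite (seg_split q a b (1/2)) by (lra || apply P_segok; auto).
  rewrite (seg_split q b c (1/2)) by (lra || apply P_segok; auto).
  rewrite (seg_split q c a (1/2)) by (lra || apply P_segok; auto).
  fold (mid a b) (mid b c) (mid c a).
  rewrite (seg_rev q (mid a b) (mid c a)) by (apply P_segok; apply P_mid; auto).
  rewrite (seg_rev q (mid a b) (mid b c)) by (apply P_segok; apply P_mid; auto).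
  rewrite (seg_rev q (mid b c) (mid c a)) by (apply P_segok; apply P_mid; auto).
  ring.
Qed.

Definition T3 := (C * C * C)%type.
Definition TriT (t : T3) : C := let '(a, b, c) := t in Tri q a b c.
Definition tsub (k : nat) (t : T3) : T3 :=
  let '(a, b, c) := t in
  match k with
  | O => (a, mid a b, mid c a)
  | 1%nat => (mid a b, b, mid b c)
  | 2%nat => (mid c a, mid b c, c)
  | _ => (mid a b, mid b c, mid c a)
  end.
Definition InvP (t : T3) : Prop := let '(a, b, c) := t in P a /\ P b /\ P c.

Definition choose (t : T3) : T3 :=
  if Rle_dec (Cmod (TriT t) / 4) (Cmod (TriT (tsub 0 t))) then tsub 0 t else
  if Rle_dec (Cmod (TriT t) / 4) (Cmod (TriT (tsub 1 t))) then tsub 1 t else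
  if Rle_dec (Cmod (TriT t) / 4) (Cmod (TriT (tsub 2 t))) then tsub 2 t else tsub 3 t.

Lemma InvP_sub k t : InvP t -> InvP (tsub k t).
Proof.
  destruct t as [[a b] c]. intros [Ha [Hb Hc]].
  destruct k as [|[|[|k]]]; simpl; repeat split; auto; apply P_mid; auto.
Qed.

Lemma choose_sub t : exists k, choose t = tsub k t.
Proof.
  unfold choose. destruct Rle_dec. exists 0%nat; auto. destruct Rle_dec. exists 1%nat; auto.
  destruct Rle_dec. exists 2%nat; auto. exists 3%nat; auto.
Qed.

Lemma InvP_choose t : InvP t -> InvP (choose t).
Proof. intros H. destruct (choose_sub t) as [k E]. rewrite E. apply InvP_sub; auto. Qed.

Lemma choose_big t : InvP t -> Cmod (TriT t) / 4 <= Cmod (TriT (choose t)).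
Proof.
  intros H. destruct t as [[a b] c]. destruct H as [Ha [Hb Hc]].
  assert (E : TriT (a, b, c) = (TriT (tsub 0 (a,b,c)) + TriT (tsub 1 (a,b,c)) + TriT (tsub 2 (a,b,c)) + TriT (tsub 3 (a,b,c)))%C).
  { simpl. apply sub4; auto. }
  unfold choose. destruct Rle_dec; auto. destruct Rle_dec; auto. destruct Rle_dec; auto.
  assert (Ht := Cmod_triangle (TriT (tsub 0 (a,b,c)) + TriT (tsub 1 (a,b,c)) + TriT (tsub 2 (a,b,c))) (TriT (tsub 3 (a,b,c)))).
  assert (Ht2 := Cmod_triangle (TriT (tsub 0 (a,b,c)) + TriT (tsub 1 (a,b,c))) (TriT (tsub 2 (a,b,c)))).
  assert (Ht3 := Cmod_triangle (TriT (tsub 0 (a,b,c))) (TriT (tsub 1 (a,b,c)))).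
  rewrite <- E in Ht. lra.
Qed.

Definition perim (t : T3) : R := let '(a, b, c) := t in Cmod (b - a) + Cmod (c - b) + Cmod (a - c).
Definition v1 (t : T3) : C := let '(a, b, c) := t in a.

Lemma half_mod (x y : C) : x = (RtoC (1/2) * y)%C -> Cmod x = Cmod y / 2.
Proof. intros ->. rewrite Cmod_mult, Cmod_R, Rabs_right by lra. field. Qed.

Lemma perim_sub k t : perim (tsub k t) = perim t / 2.
Proof.
  destruct t as [[a b] c].
  destruct k as [|[|[|k]]]; simpl; unfold mid;
  repeat match goal with |- context [Cmod ?x] =>
     match x with
     | (_ - _)%C => first [ rewrite (half_mod x (b - a)) by Ceq | rewrite (half_mod x (c - b)) by Ceq
                          | rewrite (half_mod x (a - c)) by Ceq | rewrite (half_mod x (a - b)) by Ceq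
                          | rewrite (half_mod x (b - c)) by Ceq | rewrite (half_mod x (c - a)) by Ceq ]
     end end;
  try rewrite (Cmod_sub_sym a b); try rewrite (Cmod_sub_sym b c); try rewrite (Cmod_sub_sym c a); field.
Qed.

Lemma Cmod_cvx (x y a : C) (s : R) : 0 <= s <= 1 ->
  Cmod (x + RtoC s * (y - x) - a)%C <= (1 - s) * Cmod (x - a) + s * Cmod (y - a).
Proof.
  intros Hs. replace (x + RtoC s * (y - x) - a)%C with (RtoC (1 - s) * (x - a) + RtoC s * (y - a))%C by Ceq.
  eapply Rle_trans. apply Cmod_triangle. rewrite !Cmod_mult, !Cmod_R, !Rabs_right by lra. lra.
Qed.

Lemma edge_close (t : T3) (x y : C) (s : R) : 0 <= s <= 1 ->
  (let '(a, b, c) := t in (x = a /\ y = b) \/ (x = b /\ y = c) \/ (x = c /\ y = a)) ->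
  Cmod (x + RtoC s * (y - x) - v1 t)%C <= perim t.
Proof.
  intros Hs H. destruct t as [[a b] c]. simpl.
  assert (H1 : Cmod (b - a) <= Cmod (b - a) + Cmod (c - b) + Cmod (a - c)).
  { pose proof (Cmod_ge_0 (c - b)). pose proof (Cmod_ge_0 (a - c)). lra. }
  assert (H2 : Cmod (c - a) <= Cmod (b - a) + Cmod (c - b) + Cmod (a - c)).
  { rewrite Cmod_sub_sym. pose proof (Cmod_ge_0 (c - b)). pose proof (Cmod_ge_0 (b - a)). lra. }
  assert (H0 : Cmod (a - a) = 0). { replace (Cminus a a) with (RtoC 0) by Ceq. apply Cmod_0. }
  eapply Rle_trans. apply Cmod_cvx. auto.
  destruct H as [[-> ->]|[[-> ->]|[-> ->]]]; pose proof (Cmod_ge_0 (b - a)); pose proof (Cmod_ge_0 (c - a)); pose proof (Cmod_ge_0 (c - b)); pose proof (Cmod_ge_0 (a - c)); try rewrite H0; nra.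
Qed.

Lemma v1_sub_close k t : Cmod (v1 (tsub k t) - v1 t) <= perim t.
Proof.
  destruct t as [[a b] c].
  destruct k as [|[|[|k]]]; simpl; unfold mid.
  - replace (Cminus a a) with (RtoC 0) by Ceq. rewrite Cmod_0.
    pose proof (Cmod_ge_0 (b - a)). pose proof (Cmod_ge_0 (c - b)). pose proof (Cmod_ge_0 (a - c)). lra.
  - rewrite (half_mod _ (b - a)) by Ceq.
    pose proof (Cmod_ge_0 (b - a)). pose proof (Cmod_ge_0 (c - b)). pose proof (Cmod_ge_0 (a - c)). lra.
  - rewrite (half_mod _ (c - a)) by Ceq. rewrite (Cmod_sub_sym c a).
    pose proof (Cmod_ge_0 (b - a)). pose proof (Cmod_ge_0 (c - b)). pose proof (Cmod_ge_0 (a - c)). lra.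
  - rewrite (half_mod _ (b - a)) by Ceq.
    pose proof (Cmod_ge_0 (b - a)). pose proof (Cmod_ge_0 (c - b)). pose proof (Cmod_ge_0 (a - c)). lra.
Qed.

Variable t0 : T3.
Hypothesis Ht0 : InvP t0.

Fixpoint tr (n : nat) : T3 := match n with O => t0 | S n => choose (tr n) end.

Lemma tr_inv n : InvP (tr n).
Proof. induction n; simpl; auto. apply InvP_choose; auto. Qed.

Lemma tr_perim n : perim (tr n) = perim t0 / 2 ^ n.
Proof.
  induction n; simpl. field. destruct (choose_sub (tr n)) as [k E]. rewrite E, perim_sub, IHn.
  field. apply pow_nonzero. lra.
Qed.

Lemma tr_big n : Cmod (TriT t0) <= 4 ^ n * Cmod (TriT (tr n)).
Proof.
  induction n; simpl. lra. pose proof (choose_big (tr n) (tr_inv n)).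
  pose proof (pow_lt 4 n ltac:(lra)). nra.
Qed.

Lemma tr_step n : Cmod (v1 (tr (S n)) - v1 (tr n)) <= perim t0 / 2 ^ n.
Proof.
  simpl. destruct (choose_sub (tr n)) as [k E]. rewrite E, <- tr_perim. apply v1_sub_close.
Qed.

Lemma tr_cauchy n k : Cmod (v1 (tr (k + n)) - v1 (tr n)) <= 2 * perim t0 / 2 ^ n - 2 * perim t0 / 2 ^ (k + n).
Proof.
  induction k.
  - simpl. replace (Cminus (v1 (tr n)) (v1 (tr n))) with (RtoC 0) by Ceq. rewrite Cmod_0. lra.
  - replace (v1 (tr (S k + n)) - v1 (tr n))%C with ((v1 (tr (S (k + n))) - v1 (tr (k + n))) + (v1 (tr (k + n)) - v1 (tr n)))%C by (simpl; ring).
    eapply Rle_trans. apply Cmod_triangle. pose proof (tr_step (k + n)).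
    replace (2 ^ (S k + n)) with (2 * 2 ^ (k + n)) by (simpl; ring).
    assert (0 < 2 ^ (k + n)) by (apply pow_lt; lra).
    assert (perim t0 / 2 ^ (k + n) - 2 * perim t0 / (2 * 2 ^ (k + n)) = 0) by (field; lra).
    lra.
Qed.

Lemma pow2_large (M : R) : exists N : nat, M < 2 ^ N.
Proof.
  destruct (INR_archimed 1 M ltac:(lra)) as [n Hn]. exists n.
  assert (H : forall k, INR k <= 2 ^ k).
  { induction k. simpl; lra. rewrite S_INR. simpl. assert (1 <= 2 ^ k) by (apply pow_R1_Rle; lra). lra. }
  specialize (H n). lra.
Qed.

Lemma lim_of_geom (U : nat -> R) (K : R) : 0 <= K ->
  (forall n k, Rabs (U (k + n)%nat - U n) <= K / 2 ^ n) ->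
  exists x, forall n, Rabs (U n - x) <= K / 2 ^ n.
Proof.
  intros HK H.
  assert (Hc : Cauchy_crit U).
  { intros eps He. destruct (pow2_large (K / eps)) as [N HN]. exists N. intros n m Hn Hm.
    unfold Rdist.
    assert (HB : forall j, (j >= N)%nat -> K / 2 ^ j < eps).
    { intros j Hj. assert (2 ^ N <= 2 ^ j) by (apply Rle_pow; lia || lra).
      assert (0 < 2 ^ N) by (apply pow_lt; lra).
      apply Rmult_lt_compat_r with (r := eps) in HN; auto. replace (K / eps * eps) with K in HN by (field; lra).
      apply Rmult_lt_reg_r with (2 ^ j). apply pow_lt; lra. replace (K / 2 ^ j * 2 ^ j) with K by (field; apply pow_nonzero; lra).
      nra. }
    destruct (le_lt_dec n m) as [Hnm|Hnm].
    - replace m with ((m - n) + n)%nat by lia. rewrite Rabs_minus_sym. eapply Rle_lt_trans. apply H. apply HB; auto.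
    - replace n with ((n - m) + m)%nat by lia. eapply Rle_lt_trans. apply H. apply HB; auto. }
  destruct (Rcomplete.R_complete U Hc) as [x Hx]. exists x. intros n.
  apply Rle_plus_epsilon. intros eps He. destruct (Hx eps He) as [N HN].
  specialize (HN (N + n)%nat ltac:(lia)). unfold Rdist in HN. specialize (H n N).
  replace (U n - x) with ((U (N + n)%nat - x) - (U (N + n)%nat - U n)) by ring.
  eapply Rle_trans. apply Rabs_triang. rewrite Rabs_Ropp. lra.
Qed.

Lemma tr_limit : exists p : C, forall n, Cmod (v1 (tr n) - p) <= 4 * perim t0 / 2 ^ n.
Proof.
  assert (Hper : 0 <= perim t0).
  { destruct t0 as [[a b] c]. simpl. pose proof (Cmod_ge_0 (b - a)). pose proof (Cmod_ge_0 (c - b)). pose proof (Cmod_ge_0 (a - c)). lra. }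
  assert (HC : forall n k, Cmod (v1 (tr (k + n)) - v1 (tr n)) <= 2 * perim t0 / 2 ^ n).
  { intros n k. eapply Rle_trans. apply tr_cauchy. assert (0 <= 2 * perim t0 / 2 ^ (k + n)).
    apply Rmult_le_pos. lra. apply Rlt_le, Rinv_0_lt_compat, pow_lt; lra. lra. }
  destruct (lim_of_geom (fun n => fst (v1 (tr n))) (2 * perim t0)) as [x Hx]. lra.
  { intros n k. eapply Rle_trans. 2: apply (HC n k). apply (Rabs_fst_le (v1 (tr (k + n)) - v1 (tr n))). }
  destruct (lim_of_geom (fun n => snd (v1 (tr n))) (2 * perim t0)) as [y Hy]. lra.
  { intros n k. eapply Rle_trans. 2: apply (HC n k). apply (Rabs_snd_le (v1 (tr (k + n)) - v1 (tr n))). }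
  exists (x, y). intros n. eapply Rle_trans. apply Cmod_le_sum.
  specialize (Hx n). specialize (Hy n). cbv beta in Hx, Hy.
  change (fst (v1 (tr n) - (x, y))%C) with (fst (v1 (tr n)) - x).
  change (snd (v1 (tr n) - (x, y))%C) with (snd (v1 (tr n)) - y).
  replace (4 * perim t0 / 2 ^ n) with (2 * perim t0 / 2 ^ n + 2 * perim t0 / 2 ^ n) by (field; apply pow_nonzero; lra). lra.
Qed.

Lemma Ccont_minus f g x : Ccont f x -> Ccont g x -> Ccont (fun w => f w - g w)%C x.
Proof.
  intros Hf Hg eps He. destruct (Hf (eps/2)) as [d1 [Hd1 H1]]. lra. destruct (Hg (eps/2)) as [d2 [Hd2 H2]]. lra.
  exists (Rmin d1 d2). split. apply Rmin_pos; auto. intros y Hy.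
  specialize (H1 y (Rlt_le_trans _ _ _ Hy (Rmin_l _ _))). specialize (H2 y (Rlt_le_trans _ _ _ Hy (Rmin_r _ _))).
  replace (f y - g y - (f x - g x))%C with ((f y - f x) - (g y - g x))%C by ring.
  eapply Rle_lt_trans. unfold Cminus at 1. apply Cmod_triangle. rewrite Cmod_opp. lra.
Qed.

Theorem goursat_tri : TriT t0 = 0%C.
Proof.
  assert (Hper : 0 <= perim t0).
  { destruct t0 as [[a b] c]. simpl. pose proof (Cmod_ge_0 (b - a)). pose proof (Cmod_ge_0 (c - b)). pose proof (Cmod_ge_0 (a - c)). lra. }
  set (per0 := perim t0) in *.
  destruct tr_limit as [p Hp]. fold per0 in Hp.
  assert (HPp : P p).
  { apply HPcl. intros eps He. destruct (pow2_large (4 * per0 / eps)) as [n Hn].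
    exists (v1 (tr n)). split.
    - pose proof (tr_inv n). destruct (tr n) as [[a b] c]. simpl in *. tauto.
    - eapply Rle_lt_trans. apply Hp. assert (0 < 2 ^ n) by (apply pow_lt; lra).
      apply Rmult_lt_compat_r with (r := eps) in Hn; auto. replace (4 * per0 / eps * eps) with (4 * per0) in Hn by (field; lra).
      apply Rmult_lt_reg_r with (2 ^ n); auto. replace (4 * per0 / 2 ^ n * 2 ^ n) with (4 * per0) by (field; lra). nra. }
  destruct (HPd p HPp) as [l Hl].
  set (L := fun w : C => ((q p - l * p) + l * w)%C).
  assert (HLc : forall w, Ccont L w).
  { intros w. eapply DC_Ccont. apply DC_lin. }
  assert (Hmain : forall eps, 0 < eps -> Cmod (TriT t0) <= 5 * per0 ^ 2 * eps).
  { intros eps He. destruct (Hl eps He) as [d [Hd Hdl]].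
    destruct (pow2_large (5 * per0 / d)) as [n Hn].
    assert (H2n : 0 < 2 ^ n) by (apply pow_lt; lra).
    set (Rn := 5 * per0 / 2 ^ n).
    assert (HRn : Rn < d).
    { unfold Rn. apply Rmult_lt_compat_r with (r := d) in Hn; auto. replace (5 * per0 / d * d) with (5 * per0) in Hn by (field; lra).
      apply Rmult_lt_reg_r with (2 ^ n); auto. replace (5 * per0 / 2 ^ n * 2 ^ n) with (5 * per0) by (field; lra). nra. }
    pose proof (tr_big n) as Hbig. pose proof (tr_perim n) as Hpn. fold per0 in Hpn.
    pose proof (tr_inv n) as Hinv. pose proof (Hp n) as Hpn'.
    pose proof (edge_close (tr n)) as Hedge.
    destruct (tr n) as [[a b] c]. simpl in Hbig, Hpn, Hinv, Hpn', Hedge. destruct Hinv as [Ha [Hb Hc]].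
    assert (Hedge_bound : forall x y, P x -> P y ->
       ((x = a /\ y = b) \/ (x = b /\ y = c) \/ (x = c /\ y = a)) ->
       Cmod (segI (fun w => q w - L w)%C x y) <= eps * Rn * Cmod (y - x)).
    { intros x y Hx Hy Hxy. apply seg_bound.
      - intros s Hs. apply Ccont_minus. apply (P_segok x y Hx Hy s Hs). apply HLc.
      - intros s Hs. set (w := (x + RtoC s * (y - x))%C).
        assert (Hw : Cmod (w - p) <= Rn).
        { replace (w - p)%C with ((w - a) + (a - p))%C by ring. eapply Rle_trans. apply Cmod_triangle.
          pose proof (Hedge x y s Hs Hxy) as He'. fold w in He'. rewrite Hpn in He'. unfold Rn.
          replace (5 * per0 / 2 ^ n) with (per0 / 2 ^ n + 4 * per0 / 2 ^ n) by (field; lra). lra. }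
        specialize (Hdl w ltac:(lra)).
        replace (q w - L w)%C with (q w - q p - l * (w - p))%C by (unfold L; cbv beta; ring).
        eapply Rle_trans. exact Hdl. apply Rmult_le_compat_l; lra. }
    assert (Hsplit : Tri q a b c = Tri (fun w => q w - L w)%C a b c).
    { unfold Tri. rewrite !seg_minus; try (apply P_segok; auto); try (intros s _; apply HLc).
      unfold L. rewrite !seg_lin. unfold Cdiv. ring. }
    assert (HT : Cmod (Tri q a b c) <= eps * Rn * (per0 / 2 ^ n)).
    { rewrite Hsplit. unfold Tri. rewrite <- Hpn.
      eapply Rle_trans. apply Cmod_triangle. eapply Rle_trans. apply Rplus_le_compat_r. apply Cmod_triangle.
      pose proof (Hedge_bound a b Ha Hb ltac:(tauto)). pose proof (Hedge_bound b c Hb Hc ltac:(tauto)).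
      pose proof (Hedge_bound c a Hc Ha ltac:(tauto)). lra. }
    assert (E4 : 4 ^ n = 2 ^ n * 2 ^ n) by (rewrite <- Rpow_mult_distr; f_equal; ring).
    eapply Rle_trans. exact Hbig. rewrite E4.
    apply Rle_trans with (2 ^ n * 2 ^ n * (eps * Rn * (per0 / 2 ^ n))).
    apply Rmult_le_compat_l. nra. exact HT.
    right. unfold Rn. field. lra. }
  apply Cmod_eq_0. apply Rle_antisym. 2: apply Cmod_ge_0.
  destruct (Rle_dec (Cmod (TriT t0)) 0) as [H|H]; auto.
  exfalso. specialize (Hmain (Cmod (TriT t0) / (5 * per0 ^ 2 + 1))).
  assert (0 <= per0 ^ 2) by nra.
  assert (HH : Cmod (TriT t0) <= 5 * per0 ^ 2 * (Cmod (TriT t0) / (5 * per0 ^ 2 + 1))).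
  { apply Hmain. apply Rdiv_lt_0_compat; lra. }
  assert (5 * per0 ^ 2 * (Cmod (TriT t0) / (5 * per0 ^ 2 + 1)) < Cmod (TriT t0)).
  { apply Rmult_lt_reg_r with (5 * per0 ^ 2 + 1). lra.
    replace (5 * per0 ^ 2 * (Cmod (TriT t0) / (5 * per0 ^ 2 + 1)) * (5 * per0 ^ 2 + 1)) with (5 * per0 ^ 2 * Cmod (TriT t0)) by (field; lra).
    nra. }
  lra.
Qed.

End Goursat.

Lemma Cderiv_spec f z l : is_derive f z l -> Cderiv f z = l.
Proof.
  intros H. unfold Cderiv.
  assert (H1 : is_derive f z (epsilon (inhabits (0%R, 0%R) : inhabited C) (fun l : C => is_derive f z l))).
  { apply epsilon_spec. exists l. exact H. }
  apply is_C_derive_unique in H. apply is_C_derive_unique in H1. congruence.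
Qed.

Lemma analytic_DC f z : analytic_on_disc f -> in_disc z -> DC f z (Cderiv f z).
Proof.
  intros Hf Hz. destruct (Hf z Hz) as [l Hl]. apply DC_is_derive.
  rewrite (Cderiv_spec f z l Hl). exact Hl.
Qed.

Definition ip (v u : C) : R := fst v * fst u + snd v * snd u.

Lemma ip_bound v u : Rabs (ip v u) <= Cmod v * Cmod u.
Proof.
  replace (ip v u) with (fst (v * Cconj u)%C) by (unfold ip, Cconj; simpl; ring).
  rewrite <- Cmod_conj with (c := u), <- Cmod_mult. apply Rabs_fst_le.
Qed.

Lemma Cmod_cvx0 (x y : C) (s : R) : 0 <= s <= 1 ->
  Cmod (x + RtoC s * (y - x))%C <= (1 - s) * Cmod x + s * Cmod y.
Proof.
  intros Hs. replace (x + RtoC s * (y - x))%C with (RtoC (1 - s) * x + RtoC s * y)%C by Ceq.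
  eapply Rle_trans. apply Cmod_triangle. rewrite !Cmod_mult, !Cmod_R, !Rabs_right by lra. lra.
Qed.

Lemma disc_cvx (x y : C) (s : R) : 0 <= s <= 1 -> in_disc x -> in_disc y -> in_disc (x + RtoC s * (y - x))%C.
Proof.
  unfold in_disc. intros Hs Hx Hy. eapply Rle_lt_trans. apply Cmod_cvx0; auto.
  apply Rle_lt_trans with (Rmax (Cmod x) (Cmod y)). 2: apply Rmax_lub_lt; auto.
  pose proof (Rmax_l (Cmod x) (Cmod y)). pose proof (Rmax_r (Cmod x) (Cmod y)). nra.
Qed.

Section App.
Variable f : C -> C.
Variable beta : R.
Hypothesis Hf : analytic_on_disc f.
Hypothesis Hf0 : f 0%C = 0%C.

Definition qt (w : C) : C :=
  if Req_EM_T (Cmod w) 0 then Cderiv f 0%C else (f w / (w * cpw beta w))%C.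

Lemma in_disc_0 : in_disc 0%C.
Proof. unfold in_disc. rewrite Cmod_0. lra. Qed.

Lemma qt_DC w : in_disc w -> w <> 0%C -> exists l, DC qt w l.
Proof.
  intros Hw Hw0. pose proof (Cmod_gt_0 w) as [H1 _]. specialize (H1 Hw0).
  destruct (DC_cpw beta w Hw) as [lp Hp].
  assert (Hd : DC (fun y => y * cpw beta y)%C w (1 * cpw beta w + w * lp)%C).
  { apply (DC_mult (fun y => y) (cpw beta)). apply DC_id. auto. }
  assert (Hnz : (w * cpw beta w)%C <> 0%C) by (apply Cmult_neq_0; auto; apply cpw_neq_0).
  pose proof (DC_comp Cinv (fun y => y * cpw beta y)%C w _ _ (DC_Cinv _ Hnz) Hd) as Hi.
  pose proof (DC_mult f (fun y => Cinv (y * cpw beta y))%C w _ _ (analytic_DC f w Hf Hw) Hi) as Hm.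
  eexists. eapply DC_ext_loc. 2: exact Hm.
  exists (Cmod w). split; auto. intros y Hy. unfold qt.
  destruct (Req_EM_T (Cmod y) 0) as [E|E].
  - exfalso. pose proof (Cmod_sub_ge w y). rewrite Cmod_sub_sym in H. lra.
  - reflexivity.
Qed.

Lemma qt_cont0 : Ccont qt 0%C.
Proof.
  set (c0 := Cderiv f 0%C).
  assert (Hq0 : qt 0%C = c0). { unfold qt. rewrite Cmod_0. destruct Req_EM_T; [reflexivity| lra]. }
  assert (Hd0 := analytic_DC f 0%C Hf in_disc_0). fold c0 in Hd0.
  assert (Hinv : Ccont (fun y => Cinv (cpw beta y)) 0%C).
  { destruct (DC_cpw beta 0%C in_disc_0) as [lp Hp].
    eapply DC_Ccont. apply (DC_comp Cinv (cpw beta) 0%C). apply DC_Cinv. apply cpw_neq_0. exact Hp. }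
  unfold Ccont in Hinv. cbv beta in Hinv. rewrite cpw_0 in Hinv. assert (Hi1 : Cinv (RtoC 1) = RtoC 1) by (apply injective_projections; simpl; field). rewrite Hi1 in Hinv.
  intros eps He. rewrite Hq0.
  set (K := Cmod c0 + 1).
  assert (HK : 0 < K) by (unfold K; pose proof (Cmod_ge_0 c0); lra).
  destruct (Hinv (Rmin 1 (eps / (2 * K)))) as [d1 [Hd1 H1]]. apply Rmin_pos. lra. apply Rdiv_lt_0_compat; lra.
  destruct (Hd0 (eps / 8)) as [d2 [Hd2 H2]]. lra.
  exists (Rmin (Rmin d1 d2) 1). split. apply Rmin_pos. apply Rmin_pos; auto. lra.
  intros y Hy.
  assert (Hy1 : Cmod (y - 0) < d1) by (eapply Rlt_le_trans; [exact Hy|]; eapply Rle_trans; [apply Rmin_l|apply Rmin_l]).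
  assert (Hy2 : Cmod (y - 0) < d2) by (eapply Rlt_le_trans; [exact Hy|]; eapply Rle_trans; [apply Rmin_l|apply Rmin_r]).
  specialize (H1 y Hy1). specialize (H2 y Hy2).
  unfold qt. destruct (Req_EM_T (Cmod y) 0) as [E|E].
  { fold c0. replace (Cminus c0 c0) with (RtoC 0) by ring. rewrite Cmod_0. lra. }
  assert (Hy0 : y <> 0%C). { intros ->. apply E. apply Cmod_0. }
  assert (Hy0' : 0 < Cmod y) by (apply Cmod_gt_0; auto).
  rewrite Hf0 in H2. replace (y - 0)%C with y in H2 by ring. replace (y - 0)%C with y in H1 by ring.
  set (u := Cinv (cpw beta y)) in *.
  assert (Hr : Cmod (f y / y - c0) <= eps / 8).
  { replace (f y / y - c0)%C with ((f y - 0 - c0 * y) * / y)%C by (field; auto).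
    rewrite Cmod_mult, Cmod_inv by auto. apply Rmult_le_reg_r with (Cmod y); auto.
    rewrite Rmult_assoc, Rinv_l by lra. lra. }
  assert (Hu : Cmod (u - 1) < 1) by (eapply Rlt_le_trans; [exact H1| apply Rmin_l]).
  assert (Hu' : Cmod (u - 1) < eps / (2 * K)) by (eapply Rlt_le_trans; [exact H1| apply Rmin_r]).
  assert (Hub : Cmod u <= 2).
  { replace u with ((u - 1) + 1)%C by ring. eapply Rle_trans. apply Cmod_triangle. rewrite Cmod_1. lra. }
  replace (f y / (y * cpw beta y) - c0)%C with ((f y / y - c0) * u + c0 * (u - 1))%C.
  2:{ unfold u. field. split; auto. apply cpw_neq_0. }
  eapply Rle_lt_trans. apply Cmod_triangle. rewrite !Cmod_mult.
  pose proof (Cmod_ge_0 (f y / y - c0)). pose proof (Cmod_ge_0 u). pose proof (Cmod_ge_0 c0). pose proof (Cmod_ge_0 (u - 1)).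
  assert (H7 : Cmod c0 * Cmod (u - 1) <= K * (eps / (2 * K))) by (apply Rmult_le_compat; unfold K in *; lra).
  replace (K * (eps / (2 * K))) with (eps / 2) in H7 by (field; lra).
  assert (Cmod (f y / y - c0) * Cmod u <= eps / 8 * 2) by (apply Rmult_le_compat; lra).
  lra.
Qed.

Lemma qt_cont w : in_disc w -> Ccont qt w.
Proof.
  intros Hw. destruct (Req_EM_T (Cmod w) 0) as [E|E].
  - apply Cmod_eq_0 in E. subst. apply qt_cont0.
  - assert (w <> 0%C) by (intros ->; apply E, Cmod_0).
    destruct (qt_DC w Hw H) as [l Hl]. eapply DC_Ccont; eauto.
Qed.

Lemma qt_segok x y : in_disc x -> in_disc y -> SegOK qt x y.
Proof. intros Hx Hy t Ht. apply qt_cont. apply disc_cvx; auto. Qed.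


Lemma cesaro_rep z : in_disc z -> cesaro beta f z = segI qt 0%C z.
Proof.
  intros Hz. pose proof (seg_is qt 0%C z (qt_segok 0%C z in_disc_0 Hz)) as HI.
  set (I := segI qt 0%C z) in *.
  set (g := fun t : R => (f (RtoC t * z) / (RtoC t * z * cpow (1 - RtoC t * z) beta) * z)%C).
  assert (HI' : isRC g 0 1 I).
  { eapply (@is_RInt_ext C_R_NormedModule). 2: exact HI.
    intros t Ht. rewrite Rmin_left, Rmax_right in Ht by lra. unfold phi, g.
    match goal with |- @eq _ ?x ?y => change (@eq C x y) end.
    replace (0 + RtoC t * (z - 0))%C with (RtoC t * z)%C by ring.
    replace (z - 0)%C with z by ring.
    destruct (Req_EM_T (Cmod z) 0) as [E|E].
    { apply Cmod_eq_0 in E. subst. ring. }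
    assert (Hz0 : z <> 0%C) by (intros ->; apply E, Cmod_0).
    assert (Htz : (RtoC t * z)%C <> 0%C).
    { apply Cmult_neq_0; auto. intros H. apply RtoC_inj in H. lra. }
    assert (Hd : in_disc (RtoC t * z)%C).
    { unfold in_disc in *. rewrite Cmod_mult, Cmod_R, Rabs_right by lra. nra. }
    unfold qt. destruct (Req_EM_T (Cmod (RtoC t * z)) 0) as [E'|E'].
    { exfalso. apply Htz. apply Cmod_eq_0. auto. }
    rewrite cpow_eq by auto. reflexivity. }
  unfold cesaro, seg_integral, CRInt. fold g.
  apply injective_projections; simpl.
  - pose proof (@is_RInt_fct_extend_fst R_NormedModule R_NormedModule g 0 1 I HI') as H1.
    apply (@is_RInt_unique R_CompleteNormedModule) in H1. exact H1.
  - pose proof (@is_RInt_fct_extend_snd R_NormedModule R_NormedModule g 0 1 I HI') as H1.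
    apply (@is_RInt_unique R_CompleteNormedModule) in H1. exact H1.
Qed.

Lemma segI_same q a : segI q a a = 0%C.
Proof.
  unfold segI. rewrite (@RInt_ext C_R_CompleteNormedModule _ (fun _ => RtoC 0)).
  rewrite (@RInt_const C_R_CompleteNormedModule). Ceq.
  intros x _. unfold phi. match goal with |- @eq _ ?x ?y => change (@eq C x y) end. replace (Cminus a a) with (RtoC 0) by ring. ring.
Qed.

Lemma G_0 : cesaro beta f 0%C = 0%C.
Proof. rewrite cesaro_rep by apply in_disc_0. apply segI_same. Qed.

Lemma small_zero (D : C) (K e0 : R) : 0 < e0 -> (forall e, 0 < e < e0 -> Cmod D <= K * e) -> D = 0%C.
Proof.
  intros He0 H. apply Cmod_eq_0. apply Rle_antisym. 2: apply Cmod_ge_0.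
  destruct (Rle_dec (Cmod D) 0) as [Hd|Hd]; auto. exfalso.
  set (K' := Rabs K + 1).
  set (e := Rmin (e0 / 2) (Cmod D / (2 * K'))).
  assert (HK' : 0 < K') by (unfold K'; pose proof (Rabs_pos K); lra).
  assert (He : 0 < e) by (apply Rmin_pos; [lra| apply Rdiv_lt_0_compat; lra]).
  assert (He1 : e < e0) by (unfold e; eapply Rle_lt_trans; [apply Rmin_l| lra]).
  assert (He2 : e <= Cmod D / (2 * K')) by apply Rmin_r.
  specialize (H e (conj He He1)).
  assert (K * e <= K' * e) by (apply Rmult_le_compat_r; [lra| unfold K'; pose proof (Rle_abs K); lra]).
  assert (K' * e <= Cmod D / 2).
  { apply Rmult_le_compat_l with (r := K') in He2; [|lra]. replace (K' * (Cmod D / (2 * K'))) with (Cmod D / 2) in He2 by (field; lra). lra. }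
  lra.
Qed.

Lemma ip_cvx x y t u : ip (x + RtoC t * (y - x))%C u = (1 - t) * ip x u + t * ip y u.
Proof. unfold ip. simpl. ring. Qed.

Lemma ip_self u : ip u u = Cmod u ^ 2.
Proof. unfold ip. pose proof (Cmod_sq u). simpl in *. nra. Qed.

Lemma ip_minus x y u : ip (x - y)%C u = ip x u - ip y u.
Proof. unfold ip. simpl. ring. Qed.

Lemma ip_scal (e : R) x u : ip (RtoC e * x)%C u = e * ip x u.
Proof. unfold ip. simpl. ring. Qed.

Lemma qt_bound0 : exists r1 M, 0 < r1 /\ 0 <= M /\ forall w, Cmod w < r1 -> Cmod (qt w) <= M.
Proof.
  destruct (qt_cont0 1 Rlt_0_1) as [r1 [Hr1 H]]. exists r1, (Cmod (qt 0%C) + 1). split; auto. split.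
  pose proof (Cmod_ge_0 (qt 0%C)); lra.
  intros w Hw. assert (Hw' : Cmod (w - 0%C) < r1) by (replace (w - 0%C)%C with w by ring; exact Hw). specialize (H w Hw').
  replace (qt w) with ((qt w - qt 0%C) + qt 0%C)%C by ring. eapply Rle_trans. apply Cmod_triangle. lra.
Qed.

Lemma seg_small_bound x y M r1 : (forall w, Cmod w < r1 -> Cmod (qt w) <= M) ->
  Cmod x < r1 -> Cmod y < r1 -> in_disc x -> in_disc y -> Cmod (segI qt x y) <= M * Cmod (y - x).
Proof.
  intros HM Hx Hy Dx Dy. apply seg_bound. apply qt_segok; auto.
  intros t Ht. apply HM. eapply Rle_lt_trans. apply Cmod_cvx0; auto.
  apply Rle_lt_trans with (Rmax (Cmod x) (Cmod y)). 2: apply Rmax_lub_lt; auto.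
  pose proof (Rmax_l (Cmod x) (Cmod y)). pose proof (Rmax_r (Cmod x) (Cmod y)). nra.
Qed.

Lemma G_local z0 : in_disc z0 -> exists rho, 0 < rho /\ forall z, Cmod (z - z0) < rho ->
  in_disc z /\ (cesaro beta f z - cesaro beta f z0)%C = segI qt z0 z.
Proof.
  intros Hz0. destruct (Req_EM_T (Cmod z0) 0) as [E|E].
  { apply Cmod_eq_0 in E. subst. exists 1. split. lra. intros z Hz.
    replace (z - 0)%C with z in Hz by ring.
    assert (Dz : in_disc z) by (unfold in_disc; auto). split; auto.
    rewrite G_0, cesaro_rep by auto. ring. }
  set (m := Cmod z0) in *. assert (Hm : 0 < m) by (pose proof (Cmod_ge_0 z0); unfold m in *; lra).
  assert (Hm1 : m < 1) by exact Hz0.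
  set (rho := Rmin (m / 2) ((1 - m) / 2)).
  assert (Hrho : 0 < rho) by (apply Rmin_pos; lra).
  exists rho. split; auto. intros z Hz.
  assert (Hz1 : Cmod (z - z0) < m / 2) by (eapply Rlt_le_trans; [exact Hz| apply Rmin_l]).
  assert (Hz2 : Cmod (z - z0) < (1 - m) / 2) by (eapply Rlt_le_trans; [exact Hz| apply Rmin_r]).
  set (r := m + (1 - m) / 2).
  assert (Hzr : Cmod z <= r).
  { replace z with ((z - z0) + z0)%C by ring. eapply Rle_trans. apply Cmod_triangle. fold m. unfold r. lra. }
  assert (Dz : in_disc z) by (unfold in_disc; unfold r in Hzr; lra).
  split; auto.
  rewrite !cesaro_rep by auto.
  destruct qt_bound0 as [r1 [M [Hr1 [HM0 HM]]]].
  assert (Hipz : m ^ 2 / 2 <= ip z z0).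
  { replace (ip z z0) with (ip z0 z0 + ip (z - z0) z0) by (rewrite ip_minus; ring).
    rewrite ip_self. fold m. pose proof (ip_bound (z - z0) z0). fold m in H.
    apply Rabs_le_between in H. pose proof (Cmod_ge_0 (z - z0)). nra. }
  assert (Hr : r < 1) by (unfold r; lra).
  assert (HD : (segI qt 0%C z - segI qt 0%C z0 - segI qt z0 z)%C = 0%C).
  { apply (small_zero _ (4 * M) (Rmin 1 r1)). apply Rmin_pos; lra.
    intros e [He0 He1].
    assert (He2 : e < 1) by (eapply Rlt_le_trans; [exact He1| apply Rmin_l]).
    assert (He3 : e < r1) by (eapply Rlt_le_trans; [exact He1| apply Rmin_r]).
    set (a := (0%C + RtoC e * (z0 - 0%C))%C). set (b := (0%C + RtoC e * (z - 0%C))%C).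
    assert (Ea : a = (RtoC e * z0)%C) by (unfold a; ring).
    assert (Eb : b = (RtoC e * z)%C) by (unfold b; ring).
    assert (Hma : Cmod a = e * m) by (rewrite Ea, Cmod_mult, Cmod_R, Rabs_right by lra; reflexivity).
    assert (Hmb : Cmod b = e * Cmod z) by (rewrite Eb, Cmod_mult, Cmod_R, Rabs_right by lra; reflexivity).
    assert (Hzr1 : Cmod z < 1) by exact Dz.
    assert (Hmb' : Cmod b <= e) by (rewrite Hmb; pose proof (Cmod_ge_0 z); nra).
    assert (Hma' : Cmod a <= e) by (rewrite Hma; nra).
    assert (Da : in_disc a) by (unfold in_disc; lra).
    assert (Db : in_disc b) by (unfold in_disc; lra).
    set (P := fun w : C => Cmod w <= r /\ e * m ^ 2 / 2 <= ip w z0).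
    assert (HPc : forall x y t, P x -> P y -> 0 <= t <= 1 -> P (x + RtoC t * (y - x))%C).
    { intros x y t [Hx1 Hx2] [Hy1 Hy2] Ht. split.
      - eapply Rle_trans. apply Cmod_cvx0; auto. nra.
      - rewrite ip_cvx. nra. }
    assert (HPcl : forall x, (forall eps, 0 < eps -> exists y, P y /\ Cmod (y - x) < eps) -> P x).
    { intros x Hx. split.
      - apply Rle_plus_epsilon. intros eps Heps. destruct (Hx eps Heps) as [y [[Hy1 _] Hy2]].
        replace x with (y - (y - x))%C by ring. eapply Rle_trans. unfold Cminus at 1. apply Cmod_triangle.
        rewrite Cmod_opp. lra.
      - apply Rle_plus_epsilon. intros eps Heps. destruct (Hx (eps / (m + 1))) as [y [[_ Hy1] Hy2]].
        apply Rdiv_lt_0_compat; lra.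
        replace (ip x z0) with (ip y z0 - ip (y - x) z0) by (rewrite ip_minus; ring).
        pose proof (ip_bound (y - x) z0). fold m in H. apply Rabs_le_between in H.
        assert (Cmod (y - x) * m <= eps).
        { apply Rle_trans with (eps / (m + 1) * (m + 1)). pose proof (Cmod_ge_0 (y - x)). nra.
          right. field. lra. }
        lra. }
    assert (HPd : forall x, P x -> exists l, DC qt x l).
    { intros x [Hx1 Hx2]. apply qt_DC. unfold in_disc. lra.
      intros ->. assert (Hip0 : ip 0%C z0 = 0) by (unfold ip; simpl; ring). rewrite Hip0 in Hx2. assert (0 < e * m ^ 2 / 2) by (apply Rmult_lt_0_compat; [apply Rmult_lt_0_compat; [lra| apply pow_lt; lra] | lra]). lra. }
    assert (Pa : P a).
    { split. rewrite Hma. unfold r. nra. rewrite Ea, ip_scal, ip_self. fold m.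
      assert (0 <= m ^ 2) by (apply pow_le; lra). nra. }
    assert (Pz0 : P z0).
    { split. unfold r. fold m. lra. rewrite ip_self. fold m.
      assert (0 <= m ^ 2) by (apply pow_le; lra). nra. }
    assert (Hm2 : 0 <= m ^ 2) by (apply pow_le; lra).
    assert (Pz : P z). { split. auto. nra. }
    assert (Pb : P b). { split. rewrite Hmb. pose proof (Cmod_ge_0 z). unfold r in *. nra. rewrite Eb, ip_scal. nra. }
    pose proof (goursat_tri qt P HPc HPcl HPd (a, z0, z) (conj Pa (conj Pz0 Pz))) as T1.
    pose proof (goursat_tri qt P HPc HPcl HPd (a, z, b) (conj Pa (conj Pz Pb))) as T2.
    simpl in T1, T2. unfold Tri in T1, T2.
    rewrite (seg_rev qt a z) in T1 by (apply qt_segok; auto).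
    rewrite (seg_rev qt b z) in T2 by (apply qt_segok; auto).
    rewrite (seg_rev qt a b) in T2 by (apply qt_segok; auto).
    rewrite (seg_split qt 0%C z0 e) by (lra || apply qt_segok; auto using in_disc_0).
    rewrite (seg_split qt 0%C z e) by (lra || apply qt_segok; auto using in_disc_0).
    fold a b.
    replace (segI qt 0%C b + segI qt b z - (segI qt 0%C a + segI qt a z0) - segI qt z0 z)%C with
      (segI qt 0%C b - segI qt 0%C a - segI qt a b
       - (segI qt a z0 + segI qt z0 z + - segI qt a z) - (segI qt a z + - segI qt b z + - segI qt a b))%C by ring.
    rewrite T1, T2.
    replace (segI qt 0%C b - segI qt 0%C a - segI qt a b - 0 - 0)%C with
      (segI qt 0%C b + - segI qt 0%C a + - segI qt a b)%C by ring.
    assert (H0 : Cmod 0%C < r1) by (rewrite Cmod_0; lra).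
    assert (B1 := seg_small_bound 0%C b M r1 HM H0 ltac:(lra) in_disc_0 Db).
    assert (B2 := seg_small_bound 0%C a M r1 HM H0 ltac:(lra) in_disc_0 Da).
    assert (B3 := seg_small_bound a b M r1 HM ltac:(lra) ltac:(lra) Da Db).
    replace (b - 0)%C with b in B1 by ring. replace (a - 0)%C with a in B2 by ring.
    assert (Hba : Cmod (b - a) <= 2 * e).
    { eapply Rle_trans. unfold Cminus. apply Cmod_triangle. rewrite Cmod_opp. lra. }
    eapply Rle_trans. apply Cmod_triangle. eapply Rle_trans. apply Rplus_le_compat_r. apply Cmod_triangle.
    rewrite !Cmod_opp. nra. }
  replace (segI qt 0%C z - segI qt 0%C z0)%C with ((segI qt 0%C z - segI qt 0%C z0 - segI qt z0 z) + segI qt z0 z)%C by ring.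
  rewrite HD. ring.
Qed.

Lemma G_diff z0 : in_disc z0 -> DC (cesaro beta f) z0 (qt z0).
Proof.
  intros Hz0 eps He.
  destruct (qt_cont z0 Hz0 eps He) as [d1 [Hd1 H1]].
  destruct (G_local z0 Hz0) as [rho [Hrho H2]].
  exists (Rmin rho d1). split. apply Rmin_pos; auto.
  intros z Hz.
  assert (Hz1 : Cmod (z - z0) < rho) by (eapply Rlt_le_trans; [exact Hz| apply Rmin_l]).
  assert (Hz2 : Cmod (z - z0) < d1) by (eapply Rlt_le_trans; [exact Hz| apply Rmin_r]).
  destruct (H2 z Hz1) as [Dz E]. rewrite E.
  set (L := fun w : C => (qt z0 + 0 * w)%C).
  assert (EL : (qt z0 * (z - z0))%C = segI L z0 z).
  { unfold L. rewrite seg_lin. unfold Cdiv. ring. }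
  rewrite EL. rewrite <- seg_minus.
  2: apply qt_segok; auto.
  2: { intros t _. eapply DC_Ccont. apply DC_lin. }
  apply seg_bound.
  - intros t Ht. apply Ccont_minus. apply qt_segok; auto. eapply DC_Ccont. apply DC_lin.
  - intros t Ht. unfold L.
    replace (qt (z0 + RtoC t * (z - z0)) - (qt z0 + 0 * (z0 + RtoC t * (z - z0))))%C
      with (qt (z0 + RtoC t * (z - z0)) - qt z0)%C by ring.
    left. apply H1.
    replace (z0 + RtoC t * (z - z0) - z0)%C with (RtoC t * (z - z0))%C by ring.
    rewrite Cmod_mult, Cmod_R, Rabs_right by lra. pose proof (Cmod_ge_0 (z - z0)). nra.
Qed.

End App.

Lemma bloch_norm_spec alpha g : in_bloch alpha g ->
  (forall z, in_disc z -> bloch_weight alpha g z <= bloch_norm alpha g) /\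
  (forall K, (forall z, in_disc z -> bloch_weight alpha g z <= K) -> bloch_norm alpha g <= K).
Proof.
  intros [_ [M HM]]. unfold bloch_norm.
  set (E := fun x : R => exists z : C, in_disc z /\ x = bloch_weight alpha g z).
  destruct (Lub_Rbar_correct E) as [Hub Hleast].
  assert (HE0 : E (bloch_weight alpha g 0%C)) by (exists 0%C; split; auto; apply in_disc_0).
  assert (HubM : is_ub_Rbar E M) by (intros x [z [Hz ->]]; simpl; apply HM; auto).
  pose proof (Hub _ HE0) as H1. pose proof (Hleast _ HubM) as H2.
  destruct (Lub_Rbar E) as [l| |] eqn:El; simpl in H1, H2; try contradiction.
  split.
  - intros z Hz. assert (E (bloch_weight alpha g z)) by (exists z; auto). apply (Hub _ H). 
  - intros K HK. assert (is_ub_Rbar E K) by (intros x [z [Hz ->]]; simpl; apply HK; auto).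
    apply (Hleast _ H).
Qed.

Lemma Rpower_pos x y : 0 < Rpower x y.
Proof. unfold Rpower. apply exp_pos. Qed.

Lemma Rpower_1_base c : Rpower 1 c = 1.
Proof. unfold Rpower. rewrite ln_1, Rmult_0_r. apply exp_0. Qed.

Lemma Rpower_le1 a c : 0 <= c -> 0 < a <= 1 -> Rpower a c <= 1.
Proof. intros. rewrite <- (Rpower_1_base c). apply Rle_Rpower_l; auto. Qed.

Lemma bloch_weight_nonneg alpha g z : 0 <= bloch_weight alpha g z.
Proof. unfold bloch_weight. apply Rmult_le_pos. apply Rlt_le, Rpower_pos. apply Cmod_ge_0. Qed.

Lemma Rabs_fst_mult_le (c d : C) : Rabs (fst (c * d)%C) <= Cmod c * Cmod d.
Proof. rewrite <- Cmod_mult. apply Rabs_fst_le. Qed.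

Lemma deriv_fst_comp (g : C -> C) (c z : C) (t : R) l :
  DC g (RtoC t * z)%C l -> derivable_pt_lim (fun s => fst (c * g (RtoC s * z))%C) t (fst (c * (l * z))%C).
Proof.
  intros Hg eps He.
  set (rho := Cmod z). assert (Hr : 0 <= rho) by apply Cmod_ge_0.
  set (K := Cmod c * rho + 1). assert (HK : 0 < K) by (unfold K; pose proof (Cmod_ge_0 c); nra).
  destruct (Hg (eps / (2 * K))) as [d [Hd H]]. apply Rdiv_lt_0_compat; lra.
  assert (Hd' : 0 < d / (rho + 1)) by (apply Rdiv_lt_0_compat; lra).
  exists (mkposreal _ Hd'). intros h Hh0 Hh. simpl in Hh.
  assert (Hhz : Cmod (RtoC (t + h) * z - RtoC t * z)%C < d).
  { replace (RtoC (t + h) * z - RtoC t * z)%C with (RtoC h * z)%C by (rewrite RtoC_plus; ring).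
    rewrite Cmod_mult, Cmod_R. fold rho. apply Rmult_lt_compat_r with (r := rho + 1) in Hh; [|lra].
    replace (d / (rho + 1) * (rho + 1)) with d in Hh by (field; lra). pose proof (Rabs_pos h). nra. }
  specialize (H _ Hhz).
  replace (RtoC (t + h) * z - RtoC t * z)%C with (RtoC h * z)%C in H by (rewrite RtoC_plus; ring).
  rewrite Cmod_mult, Cmod_R in H. fold rho in H.
  assert (Eq : (fst (c * g (RtoC (t + h) * z))%C - fst (c * g (RtoC t * z))%C) / h - fst (c * (l * z))%C
             = fst (c * (g (RtoC (t + h) * z) - g (RtoC t * z) - l * (RtoC h * z)))%C / h).
  { simpl. field. auto. }
  rewrite Eq. unfold Rdiv. rewrite Rabs_mult, Rabs_inv.
  assert (Hh' : 0 < Rabs h) by (apply Rabs_pos_lt; auto).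
  apply Rle_lt_trans with (Cmod c * (eps / (2 * K) * (Rabs h * rho)) * / Rabs h).
  { apply Rmult_le_compat_r. apply Rlt_le, Rinv_0_lt_compat; auto.
    eapply Rle_trans. apply Rabs_fst_mult_le. apply Rmult_le_compat_l. apply Cmod_ge_0. auto. }
  replace (Cmod c * (eps / (2 * K) * (Rabs h * rho)) * / Rabs h) with (eps / (2 * K) * (Cmod c * rho)) by (field; lra).
  apply Rle_lt_trans with (eps / (2 * K) * K). apply Rmult_le_compat_l. apply Rlt_le, Rdiv_lt_0_compat; lra.
  unfold K; lra. replace (eps / (2 * K) * K) with (eps / 2) by (field; lra). lra.
Qed.

Lemma deriv_Psi (K0 rho g t : R) : 0 < 1 - t * rho ->
  derivable_pt_lim (fun s => K0 * Rpower (1 - s * rho) g) t (K0 * (g * Rpower (1 - t * rho) (g - 1) * (- rho))).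
Proof.
  intros Hu. apply derivable_pt_lim_scal.
  apply (derivable_pt_lim_comp (fun s => 1 - s * rho) (fun x => Rpower x g)).
  - replace (- rho) with (0 - (1 * rho)) by ring. apply derivable_pt_lim_minus. apply derivable_pt_lim_const.
    apply derivable_pt_lim_scal_right. apply derivable_pt_lim_id.
  - apply derivable_pt_lim_power. auto.
Qed.

Lemma f_bound (alpha N : R) (f : C -> C) (z : C) :
  0 < alpha < 1 -> analytic_on_disc f -> f 0%C = 0%C -> 0 <= N ->
  (forall w, in_disc w -> bloch_weight alpha f w <= N) -> in_disc z ->
  Cmod (f z) <= N * Cmod z / (1 - alpha).
Proof.
  intros Ha Hf Hf0 HN HW Hz.
  set (rho := Cmod z). assert (Hr0 : 0 <= rho) by apply Cmod_ge_0. assert (Hr1 : rho < 1) by exact Hz.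
  set (c := Cconj (f z)).
  set (K0 := - (N / (1 - alpha))).
  set (Phi := fun s => fst (c * f (RtoC s * z))%C - Cmod (f z) * (K0 * Rpower (1 - s * rho) (1 - alpha))).
  set (dPhi := fun s => fst (c * (Cderiv f (RtoC s * z) * z))%C
                        - Cmod (f z) * (K0 * ((1 - alpha) * Rpower (1 - s * rho) (1 - alpha - 1) * (- rho)))).
  assert (Hdisc : forall s, 0 <= s <= 1 -> in_disc (RtoC s * z)%C).
  { intros s Hs. unfold in_disc. rewrite Cmod_mult, Cmod_R, Rabs_right by lra. fold rho. nra. }
  assert (Hder : forall s, 0 <= s <= 1 -> derivable_pt_lim Phi s (dPhi s)).
  { intros s Hs. apply derivable_pt_lim_minus.
    - apply deriv_fst_comp. apply analytic_DC; auto.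
    - apply derivable_pt_lim_scal. apply deriv_Psi. nra. }
  destruct (MVT_gen Phi 0 1 dPhi) as [s [Hs EM]].
  { intros x Hx. rewrite Rmin_left, Rmax_right in Hx by lra. apply is_derive_Reals. apply Hder. lra. }
  { intros x Hx. rewrite Rmin_left, Rmax_right in Hx by lra. apply derivable_continuous_pt. exists (dPhi x). apply Hder. lra. }
  rewrite Rmin_left, Rmax_right in Hs by lra.
  assert (Hneg : dPhi s <= 0).
  { unfold dPhi. set (l := Cderiv f (RtoC s * z)%C). set (u := 1 - s * rho).
    assert (Hu : 0 < u) by (unfold u; nra).
    replace (1 - alpha - 1) with (- alpha) by ring.
    replace (Cmod (f z) * (K0 * ((1 - alpha) * Rpower u (- alpha) * - rho))) with (Cmod (f z) * (N * rho * Rpower u (- alpha))).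
    2:{ unfold K0. field. lra. }
    assert (Hw := HW _ (Hdisc s Hs)). unfold bloch_weight in Hw. fold l in Hw.
    rewrite Cmod_mult, Cmod_R, Rabs_right in Hw by lra. fold rho in Hw.
    assert (Hp1 : Rpower u alpha <= Rpower (1 - (s * rho) ^ 2) alpha).
    { apply Rle_Rpower_l. lra. split. auto. unfold u. assert (0 <= s * rho) by nra. assert (s * rho <= 1) by nra. nra. }
    assert (Hl : Cmod l <= N * Rpower u (- alpha)).
    { rewrite Rpower_Ropp. pose proof (Rpower_pos u alpha). pose proof (Cmod_ge_0 l).
      apply Rmult_le_reg_l with (Rpower u alpha); auto. rewrite <- Rmult_assoc, (Rmult_comm _ N), Rmult_assoc, Rinv_r by lra.
      nra. }
    eapply Rle_trans. apply Rplus_le_compat_r. apply Rle_abs. eapply Rle_trans. apply Rplus_le_compat_r. apply Rabs_fst_mult_le.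
    rewrite Cmod_mult. unfold c. rewrite Cmod_conj. fold rho.
    pose proof (Cmod_ge_0 (f z)). pose proof (Cmod_ge_0 l).
    assert (Cmod l * rho <= N * Rpower u (- alpha) * rho) by (apply Rmult_le_compat_r; auto).
    nra. }
  assert (HP1 : Phi 1 = Cmod (f z) ^ 2 - Cmod (f z) * (K0 * Rpower (1 - rho) (1 - alpha))).
  { unfold Phi. replace (RtoC 1 * z)%C with z by ring. replace (1 * rho) with rho by ring.
    f_equal. unfold c. replace (Cmod (f z) ^ 2) with (Cmod (f z) * Cmod (f z)) by ring. rewrite Cmod_sq. unfold Cconj. simpl. ring. }
  assert (HP0 : Phi 0 = - (Cmod (f z) * K0)).
  { unfold Phi. replace (RtoC 0 * z)%C with (RtoC 0) by ring. rewrite Hf0. replace (0 * rho) with 0 by ring.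
    replace (1 - 0) with 1 by ring. rewrite Rpower_1_base. simpl. ring. }
  assert (Hpw : 1 - rho <= Rpower (1 - rho) (1 - alpha)).
  { unfold Rpower. rewrite <- (exp_ln (1 - rho)) at 1 by lra.
    destruct (Req_dec rho 0) as [E|E].
    - rewrite E. replace (1 - 0) with 1 by ring. rewrite ln_1. replace ((1 - alpha) * 0) with 0 by ring. lra.
    - left. apply exp_increasing. assert (ln (1 - rho) < 0) by (rewrite <- ln_1; apply ln_increasing; lra).
      nra. }
  rewrite HP1, HP0 in EM. replace (dPhi s * (1 - 0)) with (dPhi s) in EM by ring.
  assert (E2 : Cmod (f z) ^ 2 <= Cmod (f z) * (N / (1 - alpha) * (1 - Rpower (1 - rho) (1 - alpha)))).
  { unfold K0 in EM. replace (Cmod (f z) * (N / (1 - alpha) * (1 - Rpower (1 - rho) (1 - alpha))))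
      with (Cmod (f z) * (- (N / (1 - alpha)) * Rpower (1 - rho) (1 - alpha)) - Cmod (f z) * - (N / (1 - alpha))) by ring.
    lra. }
  pose proof (Cmod_ge_0 (f z)) as Hfz.
  assert (HNa : 0 <= N / (1 - alpha)) by (apply Rdiv_le_0_compat; lra).
  assert (E3 : Cmod (f z) ^ 2 <= Cmod (f z) * (N / (1 - alpha) * rho)).
  { eapply Rle_trans. exact E2. apply Rmult_le_compat_l; auto. apply Rmult_le_compat_l; auto. lra. }
  destruct (Req_dec (Cmod (f z)) 0) as [E0|E0].
  { rewrite E0. apply Rdiv_le_0_compat; [nra|lra]. }
  assert (0 < Cmod (f z)) by lra.
  replace (N * rho / (1 - alpha)) with (N / (1 - alpha) * rho) by (field; lra).
  nra.
Qed.

Definition cint (beta : R) (f : C -> C) (z : C) (t : R) : C :=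
  (f (RtoC t * z) / (RtoC t * z * cpow (1 - RtoC t * z) beta) * z)%C.

Lemma cesaro_is f beta z : analytic_on_disc f -> f 0%C = 0%C -> in_disc z ->
  isRC (cint beta f z) 0 1 (cesaro beta f z).
Proof.
  intros Hf Hf0 Hz. rewrite (cesaro_rep f beta Hf Hf0 z Hz).
  pose proof (seg_is (qt f beta) 0%C z (qt_segok f beta Hf Hf0 0%C z in_disc_0 Hz)) as HI.
  eapply (@is_RInt_ext C_R_NormedModule). 2: exact HI.
  intros t Ht. rewrite Rmin_left, Rmax_right in Ht by lra. unfold phi, cint.
  match goal with |- @eq _ ?x ?y => change (@eq C x y) end.
  replace (0 + RtoC t * (z - 0))%C with (RtoC t * z)%C by ring.
  replace (z - 0)%C with z by ring.
  destruct (Req_EM_T (Cmod z) 0) as [E|E].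
  { apply Cmod_eq_0 in E. subst. ring. }
  assert (Hz0 : z <> 0%C) by (intros ->; apply E, Cmod_0).
  assert (Htz : (RtoC t * z)%C <> 0%C).
  { apply Cmult_neq_0; auto. intros H. apply RtoC_inj in H. lra. }
  assert (Hd : in_disc (RtoC t * z)%C).
  { unfold in_disc in *. rewrite Cmod_mult, Cmod_R, Rabs_right by lra. nra. }
  unfold qt. destruct (Req_EM_T (Cmod (RtoC t * z)) 0) as [E'|E'].
  { exfalso. apply Htz. apply Cmod_eq_0. auto. }
  rewrite cpow_eq by auto. reflexivity.
Qed.

Lemma CRInt_is (g : R -> C) (I : C) : isRC g 0 1 I -> CRInt g 0 1 = I.
Proof.
  intros HI. unfold CRInt. apply injective_projections; simpl.
  - pose proof (@is_RInt_fct_extend_fst R_NormedModule R_NormedModule g 0 1 I HI) as H1.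
    apply (@is_RInt_unique R_CompleteNormedModule) in H1. exact H1.
  - pose proof (@is_RInt_fct_extend_snd R_NormedModule R_NormedModule g 0 1 I HI) as H1.
    apply (@is_RInt_unique R_CompleteNormedModule) in H1. exact H1.
Qed.

Lemma isRC_cmul (a : C) (g : R -> C) (I : C) : isRC g 0 1 I -> isRC (fun t => a * g t)%C 0 1 (a * I)%C.
Proof.
  intros HI.
  pose proof (@is_RInt_fct_extend_fst R_NormedModule R_NormedModule g 0 1 I HI) as H1.
  pose proof (@is_RInt_fct_extend_snd R_NormedModule R_NormedModule g 0 1 I HI) as H2.
  assert (R1 : is_RInt (fun t => fst a * fst (g t) - snd a * snd (g t)) 0 1 (fst a * fst I - snd a * snd I)).
  { apply (@is_RInt_minus R_NormedModule). apply (@is_RInt_scal R_NormedModule) with (k := fst a) in H1. exact H1.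
    apply (@is_RInt_scal R_NormedModule) with (k := snd a) in H2. exact H2. }
  assert (R2 : is_RInt (fun t => fst a * snd (g t) + snd a * fst (g t)) 0 1 (fst a * snd I + snd a * fst I)).
  { apply (@is_RInt_plus R_NormedModule). apply (@is_RInt_scal R_NormedModule) with (k := fst a) in H2. exact H2.
    apply (@is_RInt_scal R_NormedModule) with (k := snd a) in H1. exact H1. }
  pose proof (@is_RInt_fct_extend_pair R_NormedModule R_NormedModule
     (fun t => (fst a * fst (g t) - snd a * snd (g t), fst a * snd (g t) + snd a * fst (g t))) 0 1 _ _ R1 R2) as I3.
  change (isRC (fun t => (fst a * fst (g t) - snd a * snd (g t), fst a * snd (g t) + snd a * fst (g t))) 0 1
    (fst a * fst I - snd a * snd I, fst a * snd I + snd a * fst I)) in I3.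
  replace (a * I)%C with (fst a * fst I - snd a * snd I, fst a * snd I + snd a * fst I) by Ceq.
  eapply (@is_RInt_ext C_R_NormedModule). 2: exact I3.
  intros x _. apply injective_projections; reflexivity.
Qed.

Lemma ratio_bound (alpha beta : R) (z : C) : 0 < alpha < 1 -> beta <= alpha -> in_disc z ->
  Rpower (1 - Cmod z ^ 2) alpha / Rpower (Cmod (1 - z)%C) beta <= 2 + Rpower 2 (- beta).
Proof.
  intros Ha Hb Hz. set (rho := Cmod z) in *. assert (Hr0 : 0 <= rho) by apply Cmod_ge_0.
  assert (Hr1 : rho < 1) by exact Hz.
  set (u := Cmod (1 - z)%C).
  assert (Hu1 : 1 - rho <= u).
  { pose proof (Cmod_sub_ge 1 z). rewrite Cmod_1 in H. unfold u, rho. lra. }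
  assert (Hu2 : u <= 2).
  { unfold u. unfold Cminus. eapply Rle_trans. apply Cmod_triangle. rewrite Cmod_1, Cmod_opp. fold rho. lra. }
  assert (Hu0 : 0 < u) by lra.
  pose proof (Rpower_pos 2 (- beta)) as Hp2.
  unfold Rdiv. rewrite <- Rpower_Ropp.
  assert (Hb1 : 0 < 1 - rho ^ 2) by nra.
  destruct (Rle_dec 0 beta) as [Hbp|Hbn].
  -
    set (s := 1 - rho).
    assert (H1 : Rpower (1 - rho ^ 2) alpha <= Rpower 2 alpha * Rpower s alpha).
    { rewrite Rpower_mult_distr by (unfold s; lra). apply Rle_Rpower_l. lra. split. auto. unfold s. nra. }
    assert (H2 : Rpower u (- beta) <= Rpower s (- beta)).
    { rewrite !Rpower_Ropp. apply Rinv_le_contravar. apply Rpower_pos.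
      destruct (Req_dec beta 0) as [E|E].
      - rewrite E. unfold Rpower. rewrite !Rmult_0_l. lra.
      - apply Rle_Rpower_l. lra. unfold s. lra. }
    assert (H3 : Rpower s alpha * Rpower s (- beta) <= 1).
    { rewrite <- Rpower_plus. apply Rpower_le1. lra. unfold s. lra. }
    assert (H4 : Rpower 2 alpha <= 2).
    { rewrite <- (Rpower_1 2) at 2 by lra. apply Rle_Rpower; lra. }
    pose proof (Rpower_pos (1 - rho ^ 2) alpha). pose proof (Rpower_pos u (- beta)).
    pose proof (Rpower_pos s alpha). pose proof (Rpower_pos s (- beta)). pose proof (Rpower_pos 2 alpha).
    apply Rle_trans with (Rpower 2 alpha * Rpower s alpha * Rpower s (- beta)).
    + apply Rmult_le_compat; lra.
    + rewrite Rmult_assoc. nra.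
  -
    assert (H1 : Rpower (1 - rho ^ 2) alpha <= 1) by (apply Rpower_le1; nra).
    assert (H2 : Rpower u (- beta) <= Rpower 2 (- beta)) by (apply Rle_Rpower_l; lra).
    pose proof (Rpower_pos (1 - rho ^ 2) alpha). pose proof (Rpower_pos u (- beta)).
    apply Rle_trans with (1 * Rpower 2 (- beta)). apply Rmult_le_compat; lra. lra.
Qed.

Definition Kc (alpha beta : R) : R := (2 + Rpower 2 (- beta)) / (1 - alpha) + 1.

Lemma Kc_ge1 alpha beta : alpha < 1 -> 1 <= Kc alpha beta.
Proof.
  intros Ha. unfold Kc. pose proof (Rpower_pos 2 (- beta)).
  assert (0 <= (2 + Rpower 2 (- beta)) / (1 - alpha)) by (apply Rdiv_le_0_compat; lra). lra.
Qed.

Lemma G_weight alpha beta f z : 0 < alpha < 1 -> beta <= alpha -> in_bloch0 alpha f -> in_disc z ->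
  bloch_weight alpha (cesaro beta f) z <= Kc alpha beta * bloch_norm alpha f.
Proof.
  intros Ha Hb [Hbf Hf0] Hz. pose proof Hbf as [Hf _].
  change (f 0%C = 0%C) in Hf0.
  destruct (bloch_norm_spec alpha f Hbf) as [HN _].
  set (N := bloch_norm alpha f) in *.
  assert (HN0 : 0 <= N) by (eapply Rle_trans; [apply bloch_weight_nonneg| apply (HN 0%C in_disc_0)]).
  pose proof (Kc_ge1 alpha beta ltac:(lra)) as HK.
  unfold bloch_weight.
  rewrite (Cderiv_spec _ _ _ (proj1 (DC_is_derive _ _ _) (G_diff f beta Hf Hf0 z Hz))).
  unfold qt. destruct (Req_EM_T (Cmod z) 0) as [E|E].
  - apply Cmod_eq_0 in E. subst z. specialize (HN 0%C in_disc_0). unfold bloch_weight in HN. nra.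
  - assert (Hz0 : z <> 0%C) by (intros ->; apply E, Cmod_0).
    assert (Hzp : 0 < Cmod z) by (apply Cmod_gt_0; auto).
    rewrite <- cpow_eq by auto.
    assert (Hu : Cmod (1 - z)%C <> 0).
    { pose proof (in_disc_fst z Hz). pose proof (fst_le_Cmod (1 - z)%C). lra. }
    rewrite Cmod_div. 2: { apply Cmult_neq_0; auto. rewrite cpow_eq by auto. apply cpw_neq_0. }
    rewrite Cmod_mult, Cmod_cpow by auto.
    pose proof (f_bound alpha N f z Ha Hf Hf0 HN0 HN Hz) as Hfz.
    pose proof (ratio_bound alpha beta z Ha Hb Hz) as Hrat.
    set (P1 := Rpower (1 - Cmod z ^ 2) alpha) in *. set (P2 := Rpower (Cmod (1 - z)%C) beta) in *.
    assert (HP1 : 0 < P1) by apply Rpower_pos. assert (HP2 : 0 < P2) by apply Rpower_pos.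
    assert (Hq : Cmod (f z) / (Cmod z * P2) <= N / (1 - alpha) / P2).
    { unfold Rdiv. rewrite Rinv_mult. 
      apply Rle_trans with (N * Cmod z / (1 - alpha) * / Cmod z * / P2).
      rewrite <- Rmult_assoc. apply Rmult_le_compat_r. apply Rlt_le, Rinv_0_lt_compat; auto.
      apply Rmult_le_compat_r. apply Rlt_le, Rinv_0_lt_compat; auto. exact Hfz.
      right. field. split; lra. }
    apply Rle_trans with (P1 * (N / (1 - alpha) / P2)).
    apply Rmult_le_compat_l; lra.
    replace (P1 * (N / (1 - alpha) / P2)) with (N / (1 - alpha) * (P1 / P2)) by (field; split; lra).
    unfold Kc. assert (0 <= N / (1 - alpha)) by (apply Rdiv_le_0_compat; lra).
    apply Rle_trans with (N / (1 - alpha) * (2 + Rpower 2 (- beta))). apply Rmult_le_compat_l; auto.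
    replace (((2 + Rpower 2 (- beta)) / (1 - alpha) + 1) * N) with (N / (1 - alpha) * (2 + Rpower 2 (- beta)) + N) by (field; lra).
    lra.
Qed.

Theorem theorem2p2 (alpha beta : R) :
  0 < alpha -> beta <= alpha -> alpha < 1 ->
  (forall f : C -> C, in_bloch0 alpha f -> in_bloch0 alpha (cesaro beta f)) /\
  (forall (f g : C -> C) (a b : C),
      in_bloch0 alpha f -> in_bloch0 alpha g ->
      forall z : C, in_disc z ->
        cesaro beta (fun w => (a * f w + b * g w)%C) z =
        (a * cesaro beta f z + b * cesaro beta g z)%C) /\
  (exists K : R, 0 <= K /\
     forall f : C -> C, in_bloch0 alpha f ->
       bloch_norm alpha (cesaro beta f) <= K * bloch_norm alpha f).
Proof.
  intros Ha Hb Ha1.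
  assert (P1 : forall f : C -> C, in_bloch0 alpha f -> in_bloch0 alpha (cesaro beta f)).
  { intros f Hf. pose proof Hf as [[Han _] Hf0]. change (f 0%C = 0%C) in Hf0.
    split. split.
    - intros z Hz. exists (qt f beta z). apply DC_is_derive. apply G_diff; auto.
    - exists (Kc alpha beta * bloch_norm alpha f). intros z Hz. apply G_weight; auto.
    - change (cesaro beta f 0%C = 0%C). apply G_0; auto. }
  split; [exact P1|split].
  - intros f g a b Hf Hg z Hz.
    destruct Hf as [[Hfa _] Hf0]. destruct Hg as [[Hga _] Hg0].
    change (f 0%C = 0%C) in Hf0. change (g 0%C = 0%C) in Hg0.
    pose proof (isRC_cmul a _ _ (cesaro_is f beta z Hfa Hf0 Hz)) as I1.
    pose proof (isRC_cmul b _ _ (cesaro_is g beta z Hga Hg0 Hz)) as I2.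
    pose proof (@is_RInt_plus C_R_NormedModule _ _ _ _ _ _ I1 I2) as I3.
    unfold cesaro at 1, seg_integral. apply CRInt_is.
    eapply (@is_RInt_ext C_R_NormedModule). 2: exact I3.
    intros t _. unfold cint. change (@eq C
      (a * (f (RtoC t * z) / (RtoC t * z * cpow (1 - RtoC t * z) beta) * z) +
       b * (g (RtoC t * z) / (RtoC t * z * cpow (1 - RtoC t * z) beta) * z))%C
      ((a * f (RtoC t * z) + b * g (RtoC t * z)) / (RtoC t * z * cpow (1 - RtoC t * z) beta) * z)%C).
    unfold Cdiv. ring.
  - exists (Kc alpha beta). split. pose proof (Kc_ge1 alpha beta Ha1). lra.
    intros f Hf. destruct (P1 f Hf) as [HG _].
    destruct (bloch_norm_spec alpha (cesaro beta f) HG) as [_ H2].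
    apply H2. intros z Hz. apply G_weight; auto.
Qed.
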